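(* Let $\gamma>0$ and assume the Hamiltonians satisfy (H) and $\min_{\mathbb R}H_\alpha=H_\alpha(0)$ for every $\alpha$. Then there exists a vertex test function $G:J^2\to\mathbb R$ associated with the parameter $\gamma$ and the flux limiter $A=A_0+\gamma$ (i.e. satisfying (i)-(vi) below) which moreover, for every $K>0$, is $C^{1,1}$ on $J_K^2=\{(x,y)\in J^2:d(x,y)\le K\}$ (on each piece $(J_\alpha\times J_\beta)\cap J_K^2$) with $$\|D^2G\|_{L^\infty(J_K^2)}\le\frac{C_K}{\gamma},$$ where $C_K$ depends only on $K$ and the Hamiltonians. Vertex test function properties: (i) $G\in C(J^2)$, $G(x,\cdot)\in C^1(J)$ and $G(\cdot,y)\in C^1(J)$ for all $x,y$; (ii) $G\ge0=G(0,0)$; (iii) $0\le G(x,x)\le\gamma$ for all $x\in J$; (iv) $\mathbf H(y,-G_y(x,y))-\mathbf H(x,G_x(x,y))\le\gamma$ for all $(x,y)\in J^2$; (v) there is a non-decreasing $g:[0,\infty)\to\mathbb R$ with $g(d(x,y))\le G(x,y)$ and $g(a)/a\to+\infty$ as $a\to+\infty$; (vi) for every $K\ge0$ there is $C_K'$ with $|G_x(x,y)|+|G_y(x,y)|\le C_K'$ whenever $d(x,y)\le K$.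
   Context: Junction: $N\ge1$, $J=\bigcup_{\alpha=1}^NJ_\alpha$, $N$ copies of $[0,\infty)$ glued at $0$; points of $J_\alpha$ identified with their coordinate; $d(x,y)=|x-y|$ on the same branch, $|x|+|y|$ otherwise. A function on $J$ is $C^1(J)$ if it is continuous and $C^1$ on each branch (one-sided at $0$); its gradient is the branch derivative off $0$ and the vector $(\partial_1,\dots,\partial_N)$ of branch derivatives at $0$. $G_x,G_y$ denote these gradients in the first/second variable. Hamiltonians (H): $H_\alpha:\mathbb R\to\mathbb R$ Lipschitz continuous, coercive, quasi-convex (sublevel sets convex). $H_\alpha^-(p)=H_\alpha(\min(p,0))$, $H_\alpha^+(p)=H_\alpha(\max(p,0))$ (since $0$ is a minimum point). $A_0=\max_\alpha\min_{\mathbb R}H_\alpha$. $F_A(p)=\max(A,\max_\alpha H_\alpha^-(p_\alpha))$. Shorthand: $\mathbf H(x,p)=H_\alpha(p)$ for $x\in J_\alpha\setminus\{0\}$, $\mathbf H(0,p)=F_A(p)$ for $p\in\mathbb R^N$, with $A=A_0+\gamma$. *)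

(* Defs.v *)
From Stdlib Require Import Reals Lra Lia.
Open Scope R_scope.

(* Junction J with N branches: a point is a pair (a, x) with a < N a branch
   index and x >= 0 its coordinate; all pairs (a, 0) denote the vertex 0.
   A function on J is a function f : nat -> R -> R (branch, coordinate). *)

Definition inJ (N : nat) (a : nat) (x : R) : Prop := (a < N)%nat /\ 0 <= x.

Definition dJ (a : nat) (x : R) (b : nat) (y : R) : R :=
  if Nat.eq_dec a b then Rabs (x - y) else x + y.

Fixpoint maxf (f : nat -> R) (n : nat) : R :=
  match n with
  | O => f O
  | S k => Rmax (maxf f k) (f (S k))
  end.

Definition maxJ (N : nat) (f : nat -> R) : R := maxf f (N - 1)%nat.

Definition Hminus (Ha : R -> R) (p : R) : R := Ha (Rmin p 0).
Definition Hplus (Ha : R -> R) (p : R) : R := Ha (Rmax p 0).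

Definition lipschitz (h : R -> R) : Prop :=
  exists L, forall p q, Rabs (h p - h q) <= L * Rabs (p - q).
Definition coercive (h : R -> R) : Prop :=
  forall M, exists R0, forall p, R0 <= Rabs p -> M <= h p.
Definition quasi_convex (h : R -> R) : Prop :=
  forall p q t, 0 <= t <= 1 -> h (t * p + (1 - t) * q) <= Rmax (h p) (h q).

(* A_0 = max_a min_R H_a; under the hypothesis min_R H_a = H_a(0) this is: *)
Definition A0 (N : nat) (H : nat -> R -> R) : R := maxJ N (fun a => H a 0).

Definition FA (N : nat) (H : nat -> R -> R) (A : R) (p : nat -> R) : R :=
  Rmax A (maxJ N (fun a => Hminus (H a) (p a))).

(* bold H at the point (a, x): H_a(p_a) off the vertex, F_A(p) at the vertex.
   p is the vector of branch derivatives (only p a is used off the vertex). *)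
Definition Hbold (N : nat) (H : nat -> R -> R) (A : R) (a : nat) (x : R)
  (p : nat -> R) : R :=
  if Req_EM_T x 0 then FA N H A p else H a (p a).

Definition branch_deriv (f : R -> R) (x l : R) : Prop :=
  forall eps, 0 < eps -> exists delta, 0 < delta /\
    forall h, h <> 0 -> 0 <= x + h -> Rabs h < delta ->
      Rabs ((f (x + h) - f x) / h - l) < eps.

Definition cont_half (f : R -> R) : Prop :=
  forall x, 0 <= x -> forall eps, 0 < eps -> exists delta, 0 < delta /\
    forall x', 0 <= x' -> Rabs (x' - x) < delta -> Rabs (f x' - f x) < eps.

Definition cont_J2 (N : nat) (G : nat -> R -> nat -> R -> R) : Prop :=
  forall a x b y, inJ N a x -> inJ N b y ->
  forall eps, 0 < eps -> exists delta, 0 < delta /\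
    forall a' x' b' y', inJ N a' x' -> inJ N b' y' ->
      dJ a x a' x' < delta -> dJ b y b' y' < delta ->
      Rabs (G a' x' b' y' - G a x b y) < eps.

(* Main.v *)
Require Import Defs.
From Stdlib Require Import Reals Lra Lia Psatz Arith ZArith ClassicalEpsilon.
Open Scope R_scope.


Lemma dpl_local f g x l r : 0 < r -> (forall t, Rabs (t - x) < r -> f t = g t) ->
  derivable_pt_lim f x l -> derivable_pt_lim g x l.
Proof.
  intros Hr Hfg Hd eps Heps.
  destruct (Hd eps Heps) as [d Hdd].
  assert (Hm : 0 < Rmin d r) by (apply Rmin_pos; [apply (cond_pos d)|lra]).
  exists (mkposreal _ Hm). intros h Hh Hhd. simpl in Hhd.
  rewrite <- !Hfg.
  - apply Hdd; auto. apply Rlt_le_trans with (1 := Hhd); apply Rmin_l.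
  - replace (x - x) with 0 by ring. rewrite Rabs_R0; lra.
  - replace (x + h - x) with h by ring. apply Rlt_le_trans with (1 := Hhd); apply Rmin_r.
Qed.

Lemma dpl_ext f g x l : (forall t, f t = g t) -> derivable_pt_lim f x l -> derivable_pt_lim g x l.
Proof. intros; apply (dpl_local f g x l 1); auto; lra. Qed.

Lemma dpl_eqv f x l l' : l = l' -> derivable_pt_lim f x l -> derivable_pt_lim f x l'.
Proof. intros ->; auto. Qed.

Lemma dpl_plus f g x a b : derivable_pt_lim f x a -> derivable_pt_lim g x b ->
  derivable_pt_lim (fun t => f t + g t) x (a + b).
Proof. intros; apply (derivable_pt_lim_plus f g); auto. Qed.
Lemma dpl_minus f g x a b : derivable_pt_lim f x a -> derivable_pt_lim g x b ->
  derivable_pt_lim (fun t => f t - g t) x (a - b).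
Proof. intros; apply (derivable_pt_lim_minus f g); auto. Qed.
Lemma dpl_mult f g x a b : derivable_pt_lim f x a -> derivable_pt_lim g x b ->
  derivable_pt_lim (fun t => f t * g t) x (a * g x + f x * b).
Proof. intros; apply (derivable_pt_lim_mult f g); auto. Qed.
Lemma dpl_const c x : derivable_pt_lim (fun _ => c) x 0.
Proof. apply (derivable_pt_lim_const c). Qed.
Lemma dpl_id x : derivable_pt_lim (fun t => t) x 1.
Proof. apply derivable_pt_lim_id. Qed.
Lemma dpl_comp f g x a b : derivable_pt_lim f x a -> derivable_pt_lim g (f x) b ->
  derivable_pt_lim (fun t => g (f t)) x (b * a).
Proof. intros; apply (derivable_pt_lim_comp f g); auto. Qed.
Lemma dpl_affine f x c k l : derivable_pt_lim f (k * x + c) l ->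
  derivable_pt_lim (fun t => f (k * t + c)) x (l * k).
Proof.
  intros Hf. apply (dpl_comp (fun t => k * t + c) f x k l); auto.
  apply (dpl_eqv _ _ (k * 1 + 0)); [ring|].
  apply dpl_plus; [|apply dpl_const].
  apply (dpl_eqv _ _ (0 * id x + k * 1)); [ring|].
  apply (dpl_mult (fun _ => k) id); [apply dpl_const|apply dpl_id].
Qed.

Definition pw (a : R) (g h : R -> R) (t : R) : R := if Rle_dec t a then g t else h t.

Lemma pw_left a g h t : t <= a -> pw a g h t = g t.
Proof. unfold pw; destruct (Rle_dec t a); lra. Qed.
Lemma pw_right a g h t : a < t -> pw a g h t = h t.
Proof. unfold pw; destruct (Rle_dec t a); lra. Qed.
Lemma pw_right' a g h t : a <= t -> g a = h a -> pw a g h t = h t.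
Proof. intros H1 H2; unfold pw; destruct (Rle_dec t a); try lra.
  assert (t = a) by lra; subst; auto. Qed.

Lemma dpl_pw a g h g' h' t :
  g a = h a -> g' a = h' a ->
  (forall s, s <= a -> derivable_pt_lim g s (g' s)) ->
  (forall s, a <= s -> derivable_pt_lim h s (h' s)) ->
  derivable_pt_lim (pw a g h) t (pw a g' h' t).
Proof.
  intros E E' Dg Dh.
  destruct (Rtotal_order t a) as [Hlt|[Heq|Hgt]].
  - rewrite pw_left by lra. apply (dpl_local g _ t _ (a - t)); [lra| |apply Dg; lra].
    intros s Hs. rewrite pw_left; auto. apply Rabs_def2 in Hs; lra.
  - subst t. rewrite pw_left by lra.
    intros eps Heps.
    destruct (Dg a (Rle_refl a) eps Heps) as [d1 H1].
    destruct (Dh a (Rle_refl a) eps Heps) as [d2 H2].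
    assert (Hm : 0 < Rmin d1 d2) by (apply Rmin_pos; [apply (cond_pos d1)|apply (cond_pos d2)]).
    exists (mkposreal _ Hm). intros h0 Hh Hhd; simpl in Hhd.
    rewrite (pw_left a g h a) by lra.
    destruct (Rle_dec h0 0).
    + rewrite pw_left by lra. apply H1; auto. apply Rlt_le_trans with (1 := Hhd); apply Rmin_l.
    + rewrite pw_right by lra. rewrite E, E'. apply H2; auto.
      apply Rlt_le_trans with (1 := Hhd); apply Rmin_r.
  - rewrite pw_right by lra. apply (dpl_local h _ t _ (t - a)); [lra| |apply Dh; lra].
    intros s Hs. rewrite pw_right; auto. apply Rabs_def2 in Hs; lra.
Qed.

Definition lipon (P : R -> Prop) (f : R -> R) (C : R) :=
  forall s t, P s -> P t -> Rabs (f s - f t) <= C * Rabs (s - t).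

Lemma lip_pw a g h C : g a = h a -> 0 <= C ->
  lipon (fun s => s <= a) g C -> lipon (fun s => a <= s) h C ->
  lipon (fun _ => True) (pw a g h) C.
Proof.
  intros E HC Lg Lh.
  assert (K : forall s t, s <= a -> a < t -> Rabs (pw a g h s - pw a g h t) <= C * Rabs (s - t)).
  { intros s t Hs Ht. rewrite pw_left, pw_right by lra.
    replace (g s - h t) with ((g s - g a) + (h a - h t)) by (rewrite E; ring).
    eapply Rle_trans; [apply Rabs_triang|].
    pose proof (Lg s a Hs (Rle_refl a)). pose proof (Lh a t (Rle_refl a) (Rlt_le _ _ Ht)).
    rewrite (Rabs_left1 (s - t)) by lra. rewrite (Rabs_left1 (s - a)) in H by lra.
    rewrite (Rabs_left1 (a - t)) in H0 by lra. nra. }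
  intros s t _ _.
  destruct (Rle_dec s a), (Rle_dec t a).
  - rewrite !pw_left by lra; auto.
  - auto with real.
  - rewrite Rabs_minus_sym, (Rabs_minus_sym s). apply K; lra.
  - rewrite !pw_right by lra. apply Lh; lra.
Qed.

Lemma lipon_weaken (P Q : R -> Prop) f C : (forall s, Q s -> P s) -> lipon P f C -> lipon Q f C.
Proof. intros HPQ L s t Hs Ht; apply L; auto. Qed.
Lemma lipon_mono P f C C' : C <= C' -> lipon P f C -> lipon P f C'.
Proof. intros Hc L s t Hs Ht. eapply Rle_trans; [apply L; auto|].
  apply Rmult_le_compat_r; auto. apply Rabs_pos. Qed.


Definition cont1 (f : R -> R) (x0 : R) := forall eps, 0 < eps -> exists d, 0 < d /\
  forall x, Rabs (x - x0) < d -> Rabs (f x - f x0) < eps.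
Definition cont2 (f : R -> R -> R) (x0 y0 : R) := forall eps, 0 < eps -> exists d, 0 < d /\
  forall x y, Rabs (x - x0) < d -> Rabs (y - y0) < d -> Rabs (f x y - f x0 y0) < eps.

Lemma dpl_cont1 f x l : derivable_pt_lim f x l -> cont1 f x.
Proof.
  intros Hd. assert (Hc : continuity_pt f x).
  { apply derivable_continuous_pt. exists l; exact Hd. }
  intros eps Heps. destruct (Hc eps Heps) as [d [Hd0 Hdd]].
  exists d; split; auto. intros x1 Hx1.
  destruct (Req_dec x1 x) as [->|Hne].
  - replace (f x - f x) with 0 by ring; rewrite Rabs_R0; auto.
  - apply (Hdd x1). split; [split; [exact I| auto]|]. simpl; unfold Rdist; auto.
Qed.

Lemma cont2_plus f g x y : cont2 f x y -> cont2 g x y -> cont2 (fun a b => f a b + g a b) x y.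
Proof.
  intros Hf Hg eps Heps.
  destruct (Hf (eps/2)) as [d1 [P1 Q1]]; [lra|]. destruct (Hg (eps/2)) as [d2 [P2 Q2]]; [lra|].
  exists (Rmin d1 d2); split; [apply Rmin_pos; auto|]. intros a b Ha Hb.
  pose proof (Rmin_l d1 d2); pose proof (Rmin_r d1 d2).
  specialize (Q1 a b ltac:(lra) ltac:(lra)). specialize (Q2 a b ltac:(lra) ltac:(lra)).
  replace (f a b + g a b - (f x y + g x y)) with ((f a b - f x y) + (g a b - g x y)) by ring.
  eapply Rle_lt_trans; [apply Rabs_triang|]. lra.
Qed.
Lemma cont2_opp f x y : cont2 f x y -> cont2 (fun a b => - f a b) x y.
Proof. intros Hf eps Heps. destruct (Hf eps Heps) as [d [P Q]]. exists d; split; auto.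
  intros a b Ha Hb. replace (- f a b - - f x y) with (- (f a b - f x y)) by ring.
  rewrite Rabs_Ropp; auto. Qed.
Lemma cont2_mult f g x y : cont2 f x y -> cont2 g x y -> cont2 (fun a b => f a b * g a b) x y.
Proof.
  intros Hf Hg eps Heps.
  set (M := Rabs (f x y) + Rabs (g x y) + 1).
  assert (HM : 0 < M) by (unfold M; pose proof (Rabs_pos (f x y)); pose proof (Rabs_pos (g x y)); lra).
  set (e := Rmin 1 (eps / (2 * M))).
  assert (He : 0 < e) by (apply Rmin_pos; [lra| apply Rdiv_lt_0_compat; lra]).
  destruct (Hf e He) as [d1 [P1 Q1]]. destruct (Hg e He) as [d2 [P2 Q2]].
  exists (Rmin d1 d2); split; [apply Rmin_pos; auto|]. intros a b Ha Hb.
  pose proof (Rmin_l d1 d2); pose proof (Rmin_r d1 d2).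
  specialize (Q1 a b ltac:(lra) ltac:(lra)). specialize (Q2 a b ltac:(lra) ltac:(lra)).
  assert (e1 : e <= 1) by apply Rmin_l. assert (e2 : e <= eps / (2*M)) by apply Rmin_r.
  replace (f a b * g a b - f x y * g x y) with ((f a b - f x y) * g a b + f x y * (g a b - g x y)) by ring.
  eapply Rle_lt_trans; [apply Rabs_triang|]. rewrite !Rabs_mult.
  assert (Rabs (g a b) <= Rabs (g x y) + 1).
  { replace (g a b) with ((g a b - g x y) + g x y) by ring.
    eapply Rle_trans; [apply Rabs_triang|]. lra. }
  assert (e * M <= eps / 2).
  { apply Rmult_le_compat_r with (r := M) in e2; [|lra].
    replace (eps / (2 * M) * M) with (eps/2) in e2 by (field; lra). lra. }
  pose proof (Rabs_pos (f a b - f x y)); pose proof (Rabs_pos (g a b - g x y)).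
  pose proof (Rabs_pos (f x y)); pose proof (Rabs_pos (g x y)).
  assert (Rabs (f a b - f x y) * Rabs (g a b) <= e * (Rabs (g x y) + 1)).
  { pose proof (Rabs_pos (g a b)); apply Rmult_le_compat; lra. }
  assert (Rabs (f x y) * Rabs (g a b - g x y) <= Rabs (f x y) * e).
  { apply Rmult_le_compat_l; lra. }
  assert (e * (Rabs (g x y) + 1) + Rabs (f x y) * e = e * M) by (unfold M; ring).
  lra.
Qed.
Lemma cont2_const c x y : cont2 (fun _ _ => c) x y.
Proof. intros eps Heps; exists 1; split; [lra|]; intros; replace (c - c) with 0 by ring; rewrite Rabs_R0; lra. Qed.
Lemma cont2_fst x y : cont2 (fun a _ => a) x y.
Proof. intros eps Heps; exists eps; split; auto. Qed.
Lemma cont2_lin f u v x y : cont1 f (u * x + v * y) -> cont2 (fun a b => f (u * a + v * b)) x y.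
Proof.
  intros Hf eps Heps. destruct (Hf eps Heps) as [d [P Q]].
  set (K := Rabs u + Rabs v + 1).
  assert (HK : 0 < K) by (unfold K; pose proof (Rabs_pos u); pose proof (Rabs_pos v); lra).
  exists (d / K); split; [apply Rdiv_lt_0_compat; auto|]. intros a b Ha Hb. apply Q.
  replace (u * a + v * b - (u * x + v * y)) with (u * (a - x) + v * (b - y)) by ring.
  eapply Rle_lt_trans; [apply Rabs_triang|]. rewrite !Rabs_mult.
  pose proof (Rabs_pos u); pose proof (Rabs_pos v); pose proof (Rabs_pos (a - x)); pose proof (Rabs_pos (b-y)).
  assert (Rabs u * Rabs (a - x) <= Rabs u * (d / K)) by (apply Rmult_le_compat_l; lra).
  assert (Rabs v * Rabs (b - y) <= Rabs v * (d / K)) by (apply Rmult_le_compat_l; lra).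
  assert ((Rabs u + Rabs v) * (d / K) < d).
  { replace d with (K * (d / K)) at 2 by (field; lra).
    apply Rmult_lt_compat_r; [apply Rdiv_lt_0_compat; auto|unfold K; lra]. }
  lra.
Qed.

Lemma maxf_ge f n k : (k <= n)%nat -> f k <= maxf f n.
Proof.
  induction n; intros Hk.
  - assert (k = 0%nat) by lia; subst; simpl; lra.
  - simpl. destruct (Nat.eq_dec k (S n)) as [->|Hne].
    + apply Rmax_r.
    + eapply Rle_trans; [apply IHn; lia|apply Rmax_l].
Qed.
Lemma maxf_le f n X : (forall k, (k <= n)%nat -> f k <= X) -> maxf f n <= X.
Proof.
  induction n; intros Hk; simpl.
  - apply Hk; lia.
  - apply Rmax_lub; [apply IHn; intros; apply Hk; lia|apply Hk; lia].
Qed.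
Lemma maxJ_ge N f k : (k < N)%nat -> f k <= maxJ N f.
Proof. intros; unfold maxJ; apply maxf_ge; lia. Qed.
Lemma maxJ_le N f X : (1 <= N)%nat -> (forall k, (k < N)%nat -> f k <= X) -> maxJ N f <= X.
Proof. intros HN Hk; unfold maxJ; apply maxf_le; intros; apply Hk; lia. Qed.

Lemma FA_ge_A N H A p : A <= FA N H A p.
Proof. unfold FA; apply Rmax_l. Qed.
Lemma FA_ge N H A p b : (b < N)%nat -> Hminus (H b) (p b) <= FA N H A p.
Proof. intros; unfold FA; eapply Rle_trans; [apply (maxJ_ge N (fun a => Hminus (H a) (p a)) b); auto|apply Rmax_r]. Qed.
Lemma FA_le N H A p X : (1 <= N)%nat -> A <= X -> (forall c, (c < N)%nat -> Hminus (H c) (p c) <= X) -> FA N H A p <= X.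
Proof. intros; unfold FA; apply Rmax_lub; auto; apply maxJ_le; auto. Qed.

Lemma Hbold_nz N H A b y p : y <> 0 -> Hbold N H A b y p = H b (p b).
Proof. intros; unfold Hbold; destruct (Req_EM_T y 0); [contradiction|auto]. Qed.
Lemma Hbold_z N H A b p : Hbold N H A b 0 p = FA N H A p.
Proof. unfold Hbold; destruct (Req_EM_T 0 0); [auto|contradiction]. Qed.

Lemma dJ_same a x y : dJ a x a y = Rabs (x - y).
Proof. unfold dJ; destruct (Nat.eq_dec a a); [auto|contradiction]. Qed.
Lemma dJ_diff a b x y : a <> b -> dJ a x b y = x + y.
Proof. intros; unfold dJ; destruct (Nat.eq_dec a b); [contradiction|auto]. Qed.

Lemma dJ_near a x a' x' d : 0 <= x -> 0 <= x' -> dJ a x a' x' < d -> (0 < x -> d <= x) ->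
  Rabs (x' - x) < d /\ (0 < x -> a' = a).
Proof.
  intros Hx Hx' Hd Hdx. unfold dJ in Hd. destruct (Nat.eq_dec a a').
  - subst; split; auto. rewrite Rabs_minus_sym; auto.
  - destruct (Req_dec x 0) as [->|Hx0].
    + split. rewrite Rminus_0_r, Rabs_right by lra; lra. intros; lra.
    + assert (0 < x) by lra. specialize (Hdx H). lra.
Qed.

Definition Gof (P Q : R -> R -> R) (a : nat) (x : R) (b : nat) (y : R) : R :=
  if Nat.eq_dec a b then P x y else Q x y.

Lemma cont_J2_Gof N P Q :
  (forall x y, 0 <= x -> 0 <= y -> cont2 P x y) ->
  (forall x y, 0 <= x -> 0 <= y -> cont2 Q x y) ->
  (forall y, 0 <= y -> P 0 y = Q 0 y) -> (forall x, 0 <= x -> P x 0 = Q x 0) ->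
  cont_J2 N (Gof P Q).
Proof.
  intros CP CQ E1 E2 a x b y [_ Hx] [_ Hy] eps Heps.
  destruct (CP x y Hx Hy eps Heps) as [d1 [D1 K1]].
  destruct (CQ x y Hx Hy eps Heps) as [d2 [D2 K2]].
  set (d0 := Rmin d1 d2).
  set (d3 := if Rlt_dec 0 x then Rmin d0 x else d0).
  set (d := if Rlt_dec 0 y then Rmin d3 y else d3).
  assert (Hd0 : 0 < d0) by (apply Rmin_pos; auto).
  assert (Hd3 : 0 < d3 /\ d3 <= d0 /\ (0 < x -> d3 <= x)).
  { unfold d3; destruct (Rlt_dec 0 x).
    - split; [apply Rmin_pos; auto|split; [apply Rmin_l|intros; apply Rmin_r]].
    - split; [auto|split; [lra|intros; lra]]. }
  assert (Hd : 0 < d /\ d <= d3 /\ (0 < y -> d <= y)).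
  { unfold d; destruct (Rlt_dec 0 y).
    - split; [apply Rmin_pos; lra|split; [apply Rmin_l|intros; apply Rmin_r]].
    - split; [lra|split; [lra|intros; lra]]. }
  exists d; split; [lra|].
  intros a' x' b' y' [_ Hx'] [_ Hy'] Dx Dy.
  destruct (dJ_near a x a' x' d Hx Hx' Dx) as [Ax Bx]; [intros; lra|].
  destruct (dJ_near b y b' y' d Hy Hy' Dy) as [Ay By]; [intros; lra|].
  assert (r1 : d <= d1) by (pose proof (Rmin_l d1 d2); unfold d0 in *; lra).
  assert (r2 : d <= d2) by (pose proof (Rmin_r d1 d2); unfold d0 in *; lra).
  assert (KP : Rabs (P x' y' - P x y) < eps) by (apply K1; lra).
  assert (KQ : Rabs (Q x' y' - Q x y) < eps) by (apply K2; lra).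
  unfold Gof.
  destruct (Nat.eq_dec a' b'), (Nat.eq_dec a b); auto.
  -
    destruct (Req_dec x 0) as [->|Hx0].
    + rewrite <- E1 by lra; auto.
    + destruct (Req_dec y 0) as [->|Hy0].
      * rewrite <- E2 by lra; auto.
      * exfalso. pose proof (Bx ltac:(lra)); pose proof (By ltac:(lra)); subst; contradiction.
  - destruct (Req_dec x 0) as [->|Hx0].
    + rewrite E1 by lra; auto.
    + destruct (Req_dec y 0) as [->|Hy0].
      * rewrite E2 by lra; auto.
      * exfalso. pose proof (Bx ltac:(lra)); pose proof (By ltac:(lra)); subst; contradiction.
Qed.


Definition ramp := pw 0 (fun _ => 0) (pw 1 (fun t => t) (fun _ => 1)).
Definition rho := pw 0 (fun _ => 0) (pw 1 (fun t => t * t / 2) (fun t => t - 1/2)).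

Lemma ramp_min t c : ramp (t - c) = Rmin t (c + 1) - Rmin t c.
Proof. unfold ramp, pw, Rmin. repeat destruct Rle_dec; lra. Qed.
Lemma ramp_bounds t : 0 <= ramp t <= 1.
Proof. unfold ramp, pw. repeat destruct Rle_dec; lra. Qed.
Lemma ramp_zero t : t <= 0 -> ramp t = 0.
Proof. intros; unfold ramp, pw. repeat destruct Rle_dec; lra. Qed.
Lemma ramp_mono s t : s <= t -> ramp s <= ramp t.
Proof. intros; unfold ramp, pw. repeat destruct Rle_dec; lra. Qed.
Lemma rho_zero t : t <= 0 -> rho t = 0.
Proof. intros; unfold rho, pw. repeat destruct Rle_dec; lra. Qed.
Lemma rho_nonneg t : 0 <= rho t.
Proof. unfold rho, pw. repeat destruct Rle_dec; nra. Qed.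
Lemma rho_mono s t : s <= t -> rho s <= rho t.
Proof. intros; unfold rho, pw. repeat destruct Rle_dec; nra. Qed.
Lemma rho_ge t : t - 1/2 <= rho t.
Proof. unfold rho, pw. repeat destruct Rle_dec; nra. Qed.

Lemma rho_deriv t : derivable_pt_lim rho t (ramp t).
Proof.
  unfold rho, ramp. apply dpl_pw.
  - unfold pw; destruct Rle_dec; lra.
  - unfold pw; destruct Rle_dec; lra.
  - intros; apply dpl_const.
  - intros s _. apply dpl_pw; try lra.
    + intros u _. apply (dpl_eqv _ _ ((1 * u + u * 1) / 2)); [field|].
      apply (dpl_ext (fun t => (t * t) * / 2)); [intros; unfold Rdiv; auto|].
      apply (dpl_eqv _ _ ((1 * u + u * 1) * / 2 + (u * u) * 0)); [unfold Rdiv; ring|].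
      apply (dpl_mult (fun t => t * t) (fun _ => / 2)); [|apply dpl_const].
      apply (dpl_mult (fun t => t) (fun t => t)); apply dpl_id.
    + intros u _. apply (dpl_eqv _ _ (1 - 0)); [ring|].
      apply dpl_minus; [apply dpl_id|apply dpl_const].
Qed.

Lemma sum_stable f m n : (forall k, (m < k)%nat -> f k = 0) -> (m <= n)%nat ->
  sum_f_R0 f n = sum_f_R0 f m.
Proof.
  intros Hz Hmn. induction Hmn; auto.
  simpl. rewrite IHHmn, Hz by lia. ring.
Qed.

Lemma sum_repr f d n m : (forall k, d <= INR k -> f k = 0) -> d <= INR n -> d <= INR m ->
  sum_f_R0 f n = sum_f_R0 f m.
Proof.
  intros Hz Hn Hm. destruct (le_lt_dec m n) as [H|H].
  - apply sum_stable; auto. intros k Hk. apply Hz. apply Rle_trans with (INR m); auto.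
    apply le_INR; lia.
  - symmetry; apply sum_stable; try lia. intros k Hk. apply Hz. apply Rle_trans with (INR n); auto.
    apply le_INR; lia.
Qed.

Definition nmax (d : R) : nat := Z.to_nat (up d).
Lemma nmax_ge d : d <= INR (nmax d).
Proof.
  unfold nmax. destruct (archimed d) as [H1 _].
  destruct (Z_le_gt_dec 0 (up d)) as [Hz|Hz].
  - rewrite INR_IZR_INZ, Z2Nat.id by auto. lra.
  - replace (Z.to_nat (up d)) with 0%nat by (destruct (up d); [lia|lia|reflexivity]).
    simpl. assert (Hz' : (up d < 0)%Z) by lia. apply IZR_lt in Hz'. lra.
Qed.

Lemma sum_nonneg f n : (forall k, 0 <= f k) -> 0 <= sum_f_R0 f n.
Proof. intros Hf; induction n; simpl; [apply Hf|]. pose proof (Hf (S n)); lra. Qed.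
Lemma sum_le f g n : (forall k, f k <= g k) -> sum_f_R0 f n <= sum_f_R0 g n.
Proof. intros Hf; induction n; simpl; [apply Hf|]. pose proof (Hf (S n)); lra. Qed.
Lemma sum_mono_n f n m : (forall k, 0 <= f k) -> (n <= m)%nat -> sum_f_R0 f n <= sum_f_R0 f m.
Proof. intros Hf Hnm; induction Hnm; [lra|]. simpl. pose proof (Hf (S m)); lra. Qed.

Lemma dpl_sum (f fd : nat -> R -> R) n x :
  (forall k, derivable_pt_lim (f k) x (fd k x)) ->
  derivable_pt_lim (fun t => sum_f_R0 (fun k => f k t) n) x (sum_f_R0 (fun k => fd k x) n).
Proof.
  intros Hd. induction n; simpl; auto.
  apply (dpl_plus (fun t => sum_f_R0 (fun k => f k t) n) (f (S n))); auto.
Qed.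

Section Constr.
Variable p : R.
Hypothesis Hp : 0 < p.
Variable dk : nat -> R.
Hypothesis Hd0 : 0 <= dk 0.
Hypothesis Hdinc : forall k, dk k + 1 <= dk (S k).

Lemma dk_ge k : dk 0 + INR k <= dk k.
Proof. induction k; [simpl; lra|]. rewrite S_INR. pose proof (Hdinc k); lra. Qed.
Lemma dk_geINR k : INR k <= dk k.
Proof. pose proof (dk_ge k); lra. Qed.
Lemma dk_mono k j : (k <= j)%nat -> dk k <= dk j.
Proof. intros H; induction H; [lra|]. pose proof (Hdinc m); lra. Qed.

Definition qT (m : nat) (t : R) := sum_f_R0 (fun k => ramp (t - dk k)) m.
Definition rT (m : nat) (t : R) := sum_f_R0 (fun k => rho (t - dk k)) m.
Definition q (d : R) := qT (nmax d) d.
Definition Phi1 (d : R) := rT (nmax d) d.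

Lemma q_repr n d : d <= INR n -> q d = qT n d.
Proof.
  intros Hn. unfold q, qT. apply (sum_repr _ d); auto; [|apply nmax_ge].
  intros k Hk. apply ramp_zero. pose proof (dk_geINR k); lra.
Qed.
Lemma Phi1_repr n d : d <= INR n -> Phi1 d = rT n d.
Proof.
  intros Hn. unfold Phi1, rT. apply (sum_repr _ d); auto; [|apply nmax_ge].
  intros k Hk. apply rho_zero. pose proof (dk_geINR k); lra.
Qed.

Lemma Phi1_deriv d : derivable_pt_lim Phi1 d (q d).
Proof.
  set (n := nmax (d + 1)). pose proof (nmax_ge (d + 1)) as Hn; fold n in Hn.
  rewrite (q_repr n) by lra.
  apply (dpl_local (rT n) _ _ _ 1); [lra| |].
  - intros t Ht. symmetry. apply Phi1_repr. apply Rabs_def2 in Ht. lra.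
  - unfold rT, qT.
    apply (dpl_sum (fun k t => rho (t - dk k)) (fun k t => ramp (t - dk k))).
    intros k. apply (dpl_ext (fun t => rho (1 * t + - dk k))); [intros; f_equal; ring|].
    apply (dpl_eqv _ _ (ramp (1 * d + - dk k) * 1)); [replace (1 * d + - dk k) with (d - dk k) by ring; ring|].
    apply dpl_affine. apply rho_deriv.
Qed.

Lemma q_nonneg d : 0 <= q d.
Proof. unfold q, qT. apply sum_nonneg. intros; apply ramp_bounds. Qed.
Lemma q_zero d : d <= dk 0 -> q d = 0.
Proof.
  intros Hd. unfold q, qT. rewrite (sum_stable _ 0 _); [ |intros; apply ramp_zero; pose proof (dk_mono 0 k ltac:(lia)); lra|lia].
  simpl. apply ramp_zero. lra.
Qed.
Lemma Phi1_zero d : d <= dk 0 -> Phi1 d = 0.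
Proof.
  intros Hd. unfold Phi1, rT. rewrite (sum_stable _ 0 _); [ |intros; apply rho_zero; pose proof (dk_mono 0 k ltac:(lia)); lra|lia].
  simpl. apply rho_zero. lra.
Qed.
Lemma Phi1_nonneg d : 0 <= Phi1 d.
Proof. unfold Phi1, rT. apply sum_nonneg. intros; apply rho_nonneg. Qed.
Lemma Phi1_mono s t : s <= t -> Phi1 s <= Phi1 t.
Proof.
  intros Hst. set (n := nmax t). pose proof (nmax_ge t) as Hn; fold n in Hn.
  rewrite (Phi1_repr n s) by lra. rewrite (Phi1_repr n t) by lra.
  unfold rT. apply sum_le. intros; apply rho_mono; lra.
Qed.

Lemma sum_le_count (f : nat -> R) n m : (forall k, f k <= 1) -> (forall k, (n <= k)%nat -> f k = 0) ->
  sum_f_R0 f m <= INR n.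
Proof.
  intros H1 Hz. assert (forall m, sum_f_R0 f m <= INR (Nat.min (S m) n)).
  { induction m0.
    - simpl (sum_f_R0 f 0). destruct n.
      + rewrite Hz by lia. replace (Nat.min 1 0) with 0%nat by lia. simpl; lra.
      + replace (Nat.min 1 (S n)) with 1%nat by lia. simpl. pose proof (H1 0%nat). lra.
    - simpl (sum_f_R0 f (S m0)). destruct (le_lt_dec n (S m0)) as [Hle|Hlt].
      + rewrite Hz by lia. rewrite Nat.min_r by lia. rewrite Nat.min_r in IHm0 by lia.
        lra.
      + rewrite (Nat.min_l (S m0) n) in IHm0 by lia. rewrite Nat.min_l by lia.
        rewrite (S_INR (S m0)). pose proof (H1 (S m0)). lra. }
  eapply Rle_trans; [apply H|]. apply le_INR; lia.
Qed.

Lemma q_le_n n d : d <= dk n -> q d <= INR n.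
Proof.
  intros Hd. unfold q, qT. apply sum_le_count.
  - intros; apply ramp_bounds.
  - intros k Hk. apply ramp_zero. pose proof (dk_mono n k Hk); lra.
Qed.

Lemma qT_lip m s t : s <= t -> 0 <= qT m t - qT m s <= Rmin t (dk m + 1) - Rmin s (dk m + 1).
Proof.
  intros Hst. induction m; unfold qT in *; simpl.
  - rewrite !ramp_min. unfold Rmin; repeat destruct Rle_dec; lra.
  - rewrite !(ramp_min _ (dk (S m))). pose proof (Hdinc m).
    revert IHm. set (A1 := sum_f_R0 (fun k => ramp (t - dk k)) m).
    set (A2 := sum_f_R0 (fun k => ramp (s - dk k)) m). intros IH.
    unfold Rmin in *; repeat destruct Rle_dec; lra.
Qed.

Lemma q_lip s t : Rabs (q s - q t) <= Rabs (s - t).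
Proof.
  set (n := nmax (Rmax s t)). pose proof (nmax_ge (Rmax s t)) as Hn; fold n in Hn.
  pose proof (Rmax_l s t); pose proof (Rmax_r s t).
  rewrite (q_repr n s), (q_repr n t) by lra.
  destruct (Rle_dec s t).
  - pose proof (qT_lip n s t r). rewrite Rabs_left1, Rabs_left1 by lra.
    assert (Rmin t (dk n + 1) - Rmin s (dk n + 1) <= t - s) by (unfold Rmin; repeat destruct Rle_dec; lra). lra.
  - pose proof (qT_lip n t s ltac:(lra)). rewrite Rabs_right, Rabs_right by lra.
    assert (Rmin s (dk n + 1) - Rmin t (dk n + 1) <= s - t) by (unfold Rmin; repeat destruct Rle_dec; lra). lra.
Qed.

Lemma Phi1_superlin Mx : exists R0, forall t, R0 <= t -> Mx * t <= Phi1 t.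
Proof.
  destruct (archimed (2 * Rabs Mx)) as [Ha _].
  set (k := Z.to_nat (up (2 * Rabs Mx))).
  assert (Hk : 2 * Rabs Mx <= INR k + 1).
  { unfold k. destruct (Z_le_gt_dec 0 (up (2 * Rabs Mx))).
    - rewrite INR_IZR_INZ, Z2Nat.id by auto. lra.
    - pose proof (Rabs_pos Mx). assert (Hz' : (up (2 * Rabs Mx) < 0)%Z) by lia. apply IZR_lt in Hz'. lra. }
  exists (2 * dk k + 1). intros t Ht.
  pose proof (dk_geINR k). pose proof (pos_INR k).
  set (n := Nat.max k (nmax t)).
  rewrite (Phi1_repr n) by (pose proof (nmax_ge t); pose proof (le_INR (nmax t) n ltac:(lia)); lra).
  assert (rT k t <= rT n t) by (apply sum_mono_n; [intros; apply rho_nonneg|lia]).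
  assert (forall m, (m <= k)%nat -> INR (S m) * (t - dk k - 1/2) <= rT m t).
  { induction m; intros Hm; unfold rT in *; cbn [sum_f_R0].
    - change (INR 1) with 1. pose proof (rho_ge (t - dk 0)). pose proof (dk_mono 0 k ltac:(lia)). lra.
    - pose proof (rho_ge (t - dk (S m))). pose proof (dk_mono (S m) k Hm). specialize (IHm ltac:(lia)).
      rewrite (S_INR (S m)). nra. }
  specialize (H2 k (le_n k)). rewrite S_INR in H2.
  assert (t / 2 <= t - dk k - 1/2) by lra.
  assert (Mx * t <= (INR k + 1) * (t / 2)).
  { assert (0 <= t) by lra. pose proof (Rle_abs Mx). nra. }
  nra.
Qed.
End Constr.


Lemma ln_le_minus1 u : 0 < u -> ln u <= u - 1.
Proof. intros Hu. pose proof (exp_ineq1_le (ln u)). rewrite exp_ln in H by auto. lra. Qed.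

Lemma ln_le x y : 0 < x -> x <= y -> ln x <= ln y.
Proof. intros Hx Hxy. destruct (Req_dec x y) as [->|Hne]; [lra|]. left; apply ln_increasing; lra. Qed.
Lemma ln_div x y : 0 < x -> 0 < y -> ln (x / y) = ln x - ln y.
Proof. intros; unfold Rdiv; rewrite ln_mult, ln_Rinv; try ring; auto. apply Rinv_0_lt_compat; auto. Qed.

Lemma Rdiv_le_0_compat x y : 0 <= x -> 0 < y -> 0 <= x / y.
Proof. intros; unfold Rdiv; apply Rmult_le_pos; [auto|left; apply Rinv_0_lt_compat; auto]. Qed.

Section C.
Variable p : R.
Hypothesis Hp : 0 < p.
Variable dk : nat -> R.
Hypothesis Hd0 : 0 <= dk 0.
Hypothesis Hdinc : forall k, dk k + 1 <= dk (S k).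
Variable w : R.
Hypothesis Hw : 0 < w.
Hypothesis Hwd : w <= dk 0.

Definition Mf := pw 0 (fun d => p + d) (fun d => p + ln (1 + d)).
Definition Md := pw 0 (fun _ => 1) (fun d => / (1 + d)).

Lemma Mf_pos d : 0 <= d -> Mf d = p + ln (1 + d).
Proof. intros; unfold Mf; rewrite pw_right'; [reflexivity|auto|cbv beta]. rewrite !Rplus_0_r, ln_1; ring. Qed.
Lemma Md_pos d : 0 <= d -> Md d = / (1 + d).
Proof. intros; unfold Md; rewrite pw_right'; [reflexivity|auto|cbv beta]. rewrite !Rplus_0_r, Rinv_1; ring. Qed.

Lemma Mf_deriv d : derivable_pt_lim Mf d (Md d).
Proof.
  unfold Mf, Md. apply dpl_pw.
  - rewrite !Rplus_0_r, ln_1; ring.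
  - rewrite !Rplus_0_r, Rinv_1; ring.
  - intros s _. apply (dpl_eqv _ _ (0 + 1)); [ring|]. apply dpl_plus; [apply dpl_const|apply dpl_id].
  - intros s Hs. apply (dpl_eqv _ _ (0 + / (1 + s))); [ring|]. apply dpl_plus; [apply dpl_const|].
    apply (dpl_ext (fun t => ln (1 * t + 1))); [intros; f_equal; ring|].
    apply (dpl_eqv _ _ (/ (1 * s + 1) * 1)); [f_equal; replace (1 * s + 1) with (1 + s) by ring; ring|].
    apply dpl_affine. apply derivable_pt_lim_ln. lra.
Qed.

Lemma Mf_ge d : 0 <= d -> p <= Mf d.
Proof. intros; rewrite Mf_pos by auto. assert (0 <= ln (1 + d)); [|lra].
  rewrite <- ln_1. apply ln_le; lra. Qed.
Lemma Mf_mono s t : 0 <= s <= t -> Mf s <= Mf t.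
Proof. intros; rewrite !Mf_pos by lra. assert (ln (1 + s) <= ln (1 + t)) by (apply ln_le; lra). lra. Qed.
Lemma Mf_lip s t : 0 <= s -> 0 <= t -> Rabs (Mf s - Mf t) <= Rabs (s - t).
Proof.
  assert (K : forall s t, 0 <= s <= t -> 0 <= Mf t - Mf s <= t - s).
  { intros s0 t0 [H1 H2]. rewrite !Mf_pos by lra.
    assert (ln (1 + s0) <= ln (1 + t0)) by (apply ln_le; lra).
    pose proof (ln_le_minus1 ((1 + t0) / (1 + s0)) ltac:(apply Rdiv_lt_0_compat; lra)).
    rewrite ln_div in H0 by lra.
    assert ((1 + t0) / (1 + s0) - 1 <= t0 - s0).
    { apply Rle_trans with ((t0 - s0) / (1 + s0)).
      - right; field; lra.
      - unfold Rdiv. rewrite <- (Rmult_1_r (t0 - s0)) at 2. apply Rmult_le_compat_l; [lra|].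
        rewrite <- Rinv_1. apply Rinv_le_contravar; lra. }
    lra. }
  intros Hs Ht. destruct (Rle_dec s t).
  - pose proof (K s t ltac:(lra)). rewrite (Rabs_minus_sym (Mf s)), (Rabs_minus_sym s).
    rewrite !Rabs_right by lra. lra.
  - pose proof (K t s ltac:(lra)). rewrite !Rabs_right by lra. lra.
Qed.

Lemma Md_bounds d : 0 <= d -> 0 < Md d <= 1.
Proof. intros; rewrite Md_pos by auto. split; [apply Rinv_0_lt_compat; lra|].
  rewrite <- Rinv_1. apply Rinv_le_contravar; lra. Qed.
Lemma xMd_le x d : 0 <= x <= d -> 0 <= x * Md d <= 1.
Proof. intros [H1 H2]. rewrite Md_pos by lra.
  split; [apply Rmult_le_pos; [lra|left; apply Rinv_0_lt_compat; lra]|].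
  apply Rle_trans with (d * / (1 + d)).
  - apply Rmult_le_compat_r; [left; apply Rinv_0_lt_compat; lra|lra].
  - apply Rmult_le_reg_r with (1 + d); [lra|]. rewrite Rmult_assoc, Rinv_l by lra. lra. Qed.
Lemma Md_lip s t : 0 <= s -> 0 <= t -> Rabs (Md s - Md t) <= Rabs (s - t).
Proof.
  intros Hs Ht. rewrite !Md_pos by auto.
  replace (/ (1 + s) - / (1 + t)) with ((t - s) * (/ (1 + s) * / (1 + t))) by (field; lra).
  rewrite Rabs_mult, (Rabs_minus_sym t).
  assert (0 < / (1 + s) <= 1) by (split; [apply Rinv_0_lt_compat; lra|rewrite <- Rinv_1; apply Rinv_le_contravar; lra]).
  assert (0 < / (1 + t) <= 1) by (split; [apply Rinv_0_lt_compat; lra|rewrite <- Rinv_1; apply Rinv_le_contravar; lra]).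
  rewrite (Rabs_right (/ (1 + s) * / (1 + t))) by nra.
  assert (HH: / (1 + s) * / (1 + t) <= 1) by nra. pose proof (Rabs_pos (s - t)).
  rewrite <- (Rmult_1_r (Rabs (s - t))) at 2. apply Rmult_le_compat_l; auto.
Qed.
Lemma xMd_lip s t : 0 <= s -> 0 <= t -> Rabs (s * Md s - t * Md t) <= Rabs (s - t).
Proof.
  intros Hs Ht. rewrite !Md_pos by auto.
  replace (s * / (1 + s) - t * / (1 + t)) with ((s - t) * (/ (1 + s) * / (1 + t))) by (field; lra).
  rewrite Rabs_mult.
  assert (0 < / (1 + s) <= 1) by (split; [apply Rinv_0_lt_compat; lra|rewrite <- Rinv_1; apply Rinv_le_contravar; lra]).
  assert (0 < / (1 + t) <= 1) by (split; [apply Rinv_0_lt_compat; lra|rewrite <- Rinv_1; apply Rinv_le_contravar; lra]).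
  rewrite (Rabs_right (/ (1 + s) * / (1 + t))) by nra.
  assert (HH: / (1 + s) * / (1 + t) <= 1) by nra. pose proof (Rabs_pos (s - t)).
  rewrite <- (Rmult_1_r (Rabs (s - t))) at 2. apply Rmult_le_compat_l; auto.
Qed.

Definition f0 := p * w / 2.
Definition qq := q dk.
Definition P1 := Phi1 dk.

Definition Ff := pw (- w) (fun s => P1 (- s))
   (pw 0 (fun s => f0 * ((1 + s / w) * (1 + s / w))) (fun s => f0 + P1 s + s * Mf s)).
Definition Fd := pw (- w) (fun s => - qq (- s))
   (pw 0 (fun s => p * (1 + s / w)) (fun s => qq s + Mf s + s * Md s)).
Definition Bf := pw w (fun y => f0 * ((1 - y / w) * (1 - y / w))) (fun _ => 0).
Definition Bd := pw w (fun y => - p * (1 - y / w)) (fun _ => 0).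

Lemma P1_zero d : d <= w -> P1 d = 0.
Proof. intros; unfold P1; apply Phi1_zero; auto; lra. Qed.
Lemma qq_zero d : d <= w -> qq d = 0.
Proof. intros; unfold qq; apply q_zero; auto; lra. Qed.

Lemma Fd_at0 : p * (1 + 0 / w) = qq 0 + Mf 0 + 0 * Md 0.
Proof. rewrite qq_zero by lra. rewrite Mf_pos by lra. rewrite Rplus_0_r, ln_1. unfold Rdiv; ring. Qed.
Lemma Ff_at0 : f0 * ((1 + 0 / w) * (1 + 0 / w)) = f0 + P1 0 + 0 * Mf 0.
Proof. rewrite P1_zero by lra. unfold Rdiv; ring. Qed.
Lemma Ff_atw : P1 (- - w) = f0 * ((1 + - w / w) * (1 + - w / w)).
Proof. rewrite Ropp_involutive, P1_zero by lra. replace (- w / w) with (-1) by (field; lra). ring. Qed.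
Lemma Fd_atw : - qq (- - w) = p * (1 + - w / w).
Proof. rewrite Ropp_involutive, qq_zero by lra. replace (- w / w) with (-1) by (field; lra). ring. Qed.

Lemma Ff_deriv s : derivable_pt_lim Ff s (Fd s).
Proof.
  unfold Ff, Fd. apply dpl_pw.
  - rewrite pw_left by lra. apply Ff_atw.
  - rewrite pw_left by lra. apply Fd_atw.
  - intros u _. apply (dpl_ext (fun t => P1 (-1 * t + 0))); [intros; f_equal; ring|].
    apply (dpl_eqv _ _ (qq (-1 * u + 0) * -1)); [replace (-1 * u + 0) with (- u) by ring; ring|].
    apply dpl_affine. apply Phi1_deriv; auto.
  - intros u _. apply dpl_pw.
    + apply Ff_at0.
    + apply Fd_at0.
    + intros v _. apply (dpl_eqv _ _ (0 * ((1 + v / w) * (1 + v / w)) + f0 * ((1/w) * (1 + v/w) + (1 + v/w) * (1/w)))).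
      { unfold f0. field. lra. }
      apply (dpl_mult (fun _ => f0) (fun t => (1 + t / w) * (1 + t / w))); [apply dpl_const|].
      assert (D : derivable_pt_lim (fun t => 1 + t / w) v (1 / w)).
      { apply (dpl_ext (fun t => 1 + t * / w)); [intros; unfold Rdiv; auto|].
        apply (dpl_eqv _ _ (0 + (1 * / w + v * 0))); [unfold Rdiv; ring|].
        apply dpl_plus; [apply dpl_const|]. apply (dpl_mult (fun t => t) (fun _ => / w)); [apply dpl_id|apply dpl_const]. }
      apply (dpl_mult (fun t => 1 + t / w) (fun t => 1 + t / w)); auto.
    + intros v _. apply (dpl_eqv _ _ ((0 + qq v) + (1 * Mf v + v * Md v))); [ring|].
      apply dpl_plus; [apply dpl_plus|].
      * apply dpl_const.
      * apply Phi1_deriv; auto.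
      * 
        apply (dpl_mult (fun t => t) Mf); [apply dpl_id|apply Mf_deriv].
Qed.

Lemma Bf_deriv y : derivable_pt_lim Bf y (Bd y).
Proof.
  unfold Bf, Bd. apply dpl_pw.
  - replace (w / w) with 1 by (field; lra). ring.
  - replace (w / w) with 1 by (field; lra). ring.
  - intros v _. apply (dpl_eqv _ _ (0 * ((1 - v / w) * (1 - v / w)) + f0 * ((-1/w) * (1 - v/w) + (1 - v/w) * (-1/w)))).
    { unfold f0. field. lra. }
    apply (dpl_mult (fun _ => f0) (fun t => (1 - t / w) * (1 - t / w))); [apply dpl_const|].
    assert (D : derivable_pt_lim (fun t => 1 - t / w) v (-1 / w)).
    { apply (dpl_ext (fun t => 1 - t * / w)); [intros; unfold Rdiv; auto|].
      apply (dpl_eqv _ _ (0 - (1 * / w + v * 0))); [unfold Rdiv; ring|].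
      apply dpl_minus; [apply dpl_const|]. apply (dpl_mult (fun t => t) (fun _ => / w)); [apply dpl_id|apply dpl_const]. }
    apply (dpl_mult (fun t => 1 - t / w) (fun t => 1 - t / w)); auto.
  - intros; apply dpl_const.
Qed.

Lemma Fd_neg y : 0 <= y <= w -> Fd (- y) = p * (1 - y / w).
Proof.
  intros Hy. unfold Fd. destruct (Req_dec y w) as [->|Hne].
  - rewrite pw_left by lra. rewrite Ropp_involutive, qq_zero by lra. replace (w / w) with 1 by (field; lra); ring.
  - rewrite pw_right by lra. rewrite pw_left by lra. unfold Rdiv; ring.
Qed.
Lemma Fd_negbig y : w <= y -> Fd (- y) = - qq y.
Proof. intros. unfold Fd. rewrite pw_left by lra. rewrite Ropp_involutive; auto. Qed.
Lemma Fd_pos s : 0 <= s -> Fd s = qq s + Mf s + s * Md s.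
Proof.
  intros Hs. unfold Fd. rewrite pw_right by lra. rewrite pw_right'; [reflexivity|auto|apply Fd_at0].
Qed.
Lemma Ff_pos s : 0 <= s -> Ff s = f0 + P1 s + s * Mf s.
Proof.
  intros Hs. unfold Ff. rewrite pw_right by lra. rewrite pw_right'; [reflexivity|auto|apply Ff_at0].
Qed.
Lemma Ff_neg y : 0 <= y <= w -> Ff (- y) = f0 * ((1 - y / w) * (1 - y / w)).
Proof.
  intros Hy. unfold Ff. destruct (Req_dec y w) as [->|Hne].
  - rewrite pw_left by lra. rewrite Ropp_involutive, P1_zero by lra. replace (w / w) with 1 by (field; lra); ring.
  - rewrite pw_right by lra. rewrite pw_left by lra. unfold Rdiv; ring_simplify. ring.
Qed.
Lemma Ff_negbig y : w <= y -> Ff (- y) = P1 y.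
Proof. intros. unfold Ff. rewrite pw_left by lra. rewrite Ropp_involutive; auto. Qed.
Lemma Bf_small y : y <= w -> Bf y = f0 * ((1 - y / w) * (1 - y / w)).
Proof. intros; unfold Bf; rewrite pw_left; auto. Qed.
Lemma Bf_big y : w <= y -> Bf y = 0.
Proof. intros; unfold Bf; rewrite pw_right'; [reflexivity|auto|cbv beta]. replace (w / w) with 1 by (field; lra); ring. Qed.
Lemma Bd_small y : y <= w -> Bd y = - p * (1 - y / w).
Proof. intros; unfold Bd; rewrite pw_left; auto. Qed.
Lemma Bd_big y : w <= y -> Bd y = 0.
Proof. intros; unfold Bd; rewrite pw_right'; [reflexivity|auto|cbv beta]. replace (w / w) with 1 by (field; lra); ring. Qed.

Lemma f0_pos : 0 < f0.
Proof. unfold f0; nra. Qed.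

Lemma Ff_nonneg s : 0 <= Ff s.
Proof.
  destruct (Rle_dec s (- w)).
  - replace s with (- - s) by ring. rewrite Ff_negbig by lra. unfold P1; apply Phi1_nonneg.
  - destruct (Rle_dec s 0).
    + replace s with (- - s) by ring. rewrite Ff_neg by lra. pose proof f0_pos. apply Rmult_le_pos; [lra|]. apply Rle_0_sqr.
    + rewrite Ff_pos by lra. pose proof f0_pos. pose proof (Phi1_nonneg dk s). pose proof (Mf_ge s ltac:(lra)).
      unfold P1. nra.
Qed.

Lemma Bf_bounds y : 0 <= y -> 0 <= Bf y <= f0.
Proof.
  intros Hy. pose proof f0_pos. destruct (Rle_dec y w).
  - rewrite Bf_small by auto. assert (0 <= 1 - y / w <= 1).
    { split; [|assert (0 <= y / w) by (apply Rdiv_le_0_compat; lra); lra].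
      assert (y / w <= 1) by (apply Rmult_le_reg_r with w; [lra|]; unfold Rdiv; rewrite Rmult_assoc, Rinv_l by lra; lra). lra. }
    set (a := 1 - y / w) in *. assert (0 <= a * a <= 1) by nra.
    split; [apply Rmult_le_pos; lra|]. rewrite <- (Rmult_1_r f0) at 2. apply Rmult_le_compat_l; lra.
  - rewrite Bf_big by lra; lra.
Qed.

(* F is monotone from -y (y in [0,w]) *)
Lemma Ff_ge_B x y : 0 <= x -> 0 <= y -> Bf y <= Ff (x - y).
Proof.
  intros Hx Hy. destruct (Rle_dec w y).
  - rewrite Bf_big by auto. apply Ff_nonneg.
  - rewrite Bf_small by lra. pose proof f0_pos.
    assert (Hyw : y / w <= 1) by (apply Rmult_le_reg_r with w; [lra|]; unfold Rdiv; rewrite Rmult_assoc, Rinv_l by lra; lra).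
    destruct (Rle_dec (x - y) 0).
    + replace (x - y) with (- (y - x)) by ring. rewrite Ff_neg by lra.
      assert (0 <= 1 - y / w <= 1 - (y - x) / w).
      { split; [lra|]. unfold Rdiv. assert (0 <= x * / w) by (apply Rmult_le_pos; [lra|left; apply Rinv_0_lt_compat; lra]).
        replace ((y - x) * / w) with (y * / w - x * / w) by ring. lra. }
      set (a := 1 - y / w) in *. set (b := 1 - (y - x) / w) in *.
      apply Rmult_le_compat_l; [lra|]. nra.
    + rewrite Ff_pos by lra. pose proof (Phi1_nonneg dk (x - y)). pose proof (Mf_ge (x - y) ltac:(lra)).
      assert (0 <= 1 - y / w) by lra. assert (0 <= y / w) by (apply Rdiv_le_0_compat; lra).
      assert (1 - y / w <= 1) by lra.
      set (a := 1 - y / w) in *. assert (a * a <= 1) by nra.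
      assert (f0 * (a * a) <= f0) by (rewrite <- (Rmult_1_r f0) at 2; apply Rmult_le_compat_l; lra).
      assert (0 <= (x - y) * Mf (x - y)) by (apply Rmult_le_pos; lra). unfold P1. lra.
Qed.

Lemma Fd_ge_p s : 0 <= s -> p <= Fd s.
Proof.
  intros Hs. rewrite Fd_pos by auto. pose proof (q_nonneg dk s). pose proof (Mf_ge s Hs).
  pose proof (xMd_le s s ltac:(lra)). unfold qq; lra.
Qed.

Lemma Fd_mono_from y s : 0 <= y <= w -> - y <= s -> Fd (- y) <= Fd s.
Proof.
  intros Hy Hs. rewrite Fd_neg by auto.
  destruct (Rle_dec s 0).
  - replace s with (- (- s)) by ring. rewrite Fd_neg by lra.
    assert (- s / w <= y / w) by (unfold Rdiv; apply Rmult_le_compat_r; [left; apply Rinv_0_lt_compat|]; lra).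
    nra.
  - pose proof (Fd_ge_p s ltac:(lra)). assert (0 <= y / w) by (apply Rdiv_le_0_compat; lra). nra.
Qed.

Lemma Fd_neg_nonneg y : 0 <= y <= w -> 0 <= Fd (- y).
Proof.
  intros Hy. rewrite Fd_neg by auto.
  assert (y / w <= 1) by (apply Rmult_le_reg_r with w; [lra|]; unfold Rdiv; rewrite Rmult_assoc, Rinv_l by lra; lra). nra.
Qed.

Lemma Fd_lip s t : Rabs (Fd s - Fd t) <= (3 + p / w) * Rabs (s - t).
Proof.
  assert (Hpw : 0 < p / w) by (apply Rdiv_lt_0_compat; lra).
  assert (L : lipon (fun _ => True) Fd (3 + p / w)).
  { unfold Fd. apply lip_pw; [cbv beta; rewrite pw_left by lra; apply Fd_atw|lra| |].
    - intros a b _ _. unfold qq. rewrite Rabs_minus_sym.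
      replace (- q dk (- b) - - q dk (- a)) with (q dk (- a) - q dk (- b)) by ring.
      eapply Rle_trans; [apply q_lip; auto|].
      replace (- a - - b) with (- (a - b)) by ring. rewrite Rabs_Ropp.
      pose proof (Rabs_pos (a - b)). set (r := Rabs (a - b)) in *. set (c := p / w) in *. nra.
    - apply lipon_weaken with (fun _ => True); [auto|].
      apply lip_pw; [apply Fd_at0|lra| |].
      + intros a b _ _. replace (p * (1 + a / w) - p * (1 + b / w)) with (p / w * (a - b)) by (field; lra).
        rewrite Rabs_mult, (Rabs_right (p / w)) by lra. pose proof (Rabs_pos (a - b)).
        set (r := Rabs (a - b)) in *. set (c := p / w) in *. nra.
      + intros a b Ha Hb.
        replace (qq a + Mf a + a * Md a - (qq b + Mf b + b * Md b)) with
          ((qq a - qq b) + (Mf a - Mf b) + (a * Md a - b * Md b)) by ring.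
        eapply Rle_trans; [apply Rabs_triang|]. eapply Rle_trans; [apply Rplus_le_compat_r; apply Rabs_triang|].
        pose proof (q_lip dk Hd0 Hdinc a b). pose proof (Mf_lip a b Ha Hb). pose proof (xMd_lip a b Ha Hb).
        unfold qq. pose proof (Rabs_pos (a - b)). set (r := Rabs (a - b)) in *. set (c := p / w) in *. nra. }
  apply L; auto.
Qed.

Lemma Bd_lip s t : Rabs (Bd s - Bd t) <= (p / w) * Rabs (s - t).
Proof.
  assert (Hpw : 0 < p / w) by (apply Rdiv_lt_0_compat; lra).
  assert (L : lipon (fun _ => True) Bd (p / w)).
  { unfold Bd. apply lip_pw; [replace (w / w) with 1 by (field; lra); ring|lra| |].
    - intros a b _ _. replace (- p * (1 - a / w) - - p * (1 - b / w)) with (p / w * (a - b)) by (field; lra).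
      rewrite Rabs_mult, (Rabs_right (p / w)) by lra. lra.
    - intros a b _ _. replace (0 - 0) with 0 by ring. rewrite Rabs_R0. pose proof (Rabs_pos (a - b)). nra. }
  apply L; auto.
Qed.

Lemma Bd_bound y : 0 <= y -> Rabs (Bd y) <= p.
Proof.
  intros Hy. destruct (Rle_dec y w).
  - rewrite Bd_small by auto. assert (0 <= y / w <= 1).
    { split; [apply Rdiv_le_0_compat; lra|]. apply Rmult_le_reg_r with w; [lra|]; unfold Rdiv; rewrite Rmult_assoc, Rinv_l by lra; lra. }
    rewrite Rabs_left1 by nra. nra.
  - rewrite Bd_big by lra. rewrite Rabs_R0; lra.
Qed.


Definition Phi x y := Ff (x - y) - Bf y.
Definition Phix x y := Fd (x - y).
Definition Phiy x y := - Fd (x - y) - Bd y.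
Definition Psi x y := P1 (x + y) + x * Mf (x + y).
Definition Psix x y := qq (x + y) + Mf (x + y) + x * Md (x + y).
Definition Psiy x y := qq (x + y) + x * Md (x + y).

Lemma Phi_dx x y : derivable_pt_lim (fun s => Phi s y) x (Phix x y).
Proof.
  unfold Phi, Phix. apply (dpl_eqv _ _ (Fd (x - y) - 0)); [ring|].
  apply (dpl_minus (fun s => Ff (s - y)) (fun _ => Bf y)); [|apply dpl_const].
  apply (dpl_ext (fun s => Ff (1 * s + - y))); [intros; f_equal; ring|].
  apply (dpl_eqv _ _ (Fd (1 * x + - y) * 1)); [replace (1 * x + - y) with (x - y) by ring; ring|].
  apply dpl_affine. apply Ff_deriv; auto.
Qed.
Lemma Phi_dy x y : derivable_pt_lim (fun t => Phi x t) y (Phiy x y).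
Proof.
  unfold Phi, Phiy. apply (dpl_eqv _ _ (Fd (x - y) * -1 - Bd y)); [ring|].
  apply (dpl_minus (fun t => Ff (x - t)) Bf); [|apply Bf_deriv; auto].
  apply (dpl_ext (fun t => Ff (-1 * t + x))); [intros; f_equal; ring|].
  replace (x - y) with (-1 * y + x) by ring.
  apply dpl_affine. apply Ff_deriv; auto.
Qed.
Lemma Psi_dx x y : derivable_pt_lim (fun s => Psi s y) x (Psix x y).
Proof.
  unfold Psi, Psix. apply (dpl_eqv _ _ (qq (x + y) + (1 * Mf (x + y) + x * Md (x + y))));
    [ring|].
  apply (dpl_plus (fun s => P1 (s + y)) (fun s => s * Mf (s + y))).
  - apply (dpl_ext (fun s => P1 (1 * s + y))); [intros; f_equal; ring|].
    apply (dpl_eqv _ _ (qq (1 * x + y) * 1)); [replace (1 * x + y) with (x + y) by ring; ring|].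
    apply dpl_affine. apply Phi1_deriv; auto.
  - apply (dpl_mult (fun s => s) (fun s => Mf (s + y))); [apply dpl_id|].
    apply (dpl_ext (fun s => Mf (1 * s + y))); [intros; f_equal; ring|].
    apply (dpl_eqv _ _ (Md (1 * x + y) * 1)); [replace (1 * x + y) with (x + y) by ring; ring|].
    apply dpl_affine. apply Mf_deriv.
Qed.
Lemma Psi_dy x y : derivable_pt_lim (fun t => Psi x t) y (Psiy x y).
Proof.
  unfold Psi, Psiy. apply (dpl_eqv _ _ (qq (x + y) + (0 * Mf (x + y) + x * Md (x + y))));
    [ring|].
  apply (dpl_plus (fun t => P1 (x + t)) (fun t => x * Mf (x + t))).
  - apply (dpl_ext (fun t => P1 (1 * t + x))); [intros; f_equal; ring|].
    apply (dpl_eqv _ _ (qq (1 * y + x) * 1)); [replace (1 * y + x) with (x + y) by ring; ring|].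
    apply dpl_affine. apply Phi1_deriv; auto.
  - apply (dpl_mult (fun _ => x) (fun t => Mf (x + t))); [apply dpl_const|].
    apply (dpl_ext (fun t => Mf (1 * t + x))); [intros; f_equal; ring|].
    apply (dpl_eqv _ _ (Md (1 * y + x) * 1)); [replace (1 * y + x) with (x + y) by ring; ring|].
    apply dpl_affine. apply Mf_deriv.
Qed.

Lemma Mf_deriv' d : derivable_pt_lim Mf d (Md d).
Proof. apply Mf_deriv. Qed.

Lemma Phi_cont x y : cont2 Phi x y.
Proof.
  unfold Phi.
  assert (K : cont2 (fun a b => Ff (1 * a + -1 * b) + - Bf (0 * a + 1 * b)) x y).
  { apply (cont2_plus (fun a b => Ff (1 * a + -1 * b)) (fun a b => - Bf (0 * a + 1 * b))).
    - apply cont2_lin. eapply dpl_cont1. apply Ff_deriv; auto.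
    - apply cont2_opp. apply cont2_lin. eapply dpl_cont1. apply Bf_deriv; auto. }
  intros eps Heps; destruct (K eps Heps) as [d [Pd Qd]]. exists d; split; auto.
  intros a b Ha Hb. specialize (Qd a b Ha Hb).
    replace (1 * a + -1 * b) with (a - b) in Qd by ring. replace (1 * x + -1 * y) with (x - y) in Qd by ring.
    replace (0 * a + 1 * b) with b in Qd by ring. replace (0 * x + 1 * y) with y in Qd by ring. auto.
Qed.
Lemma Psi_cont x y : cont2 Psi x y.
Proof.
  unfold Psi.
  assert (K : cont2 (fun a b => P1 (1 * a + 1 * b) + a * Mf (1 * a + 1 * b)) x y).
  { apply (cont2_plus (fun a b => P1 (1 * a + 1 * b)) (fun a b => a * Mf (1 * a + 1 * b))).
    - apply cont2_lin. eapply dpl_cont1. apply Phi1_deriv; auto.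
    - apply (cont2_mult (fun a _ => a) (fun a b => Mf (1 * a + 1 * b))); [apply cont2_fst|].
      apply cont2_lin. eapply dpl_cont1. apply Mf_deriv. }
  intros eps Heps; destruct (K eps Heps) as [d [Pd Qd]]. exists d; split; auto.
  intros a b Ha Hb. specialize (Qd a b Ha Hb).
    replace (1 * a + 1 * b) with (a + b) in Qd by ring. replace (1 * x + 1 * y) with (x + y) in Qd by ring. auto.
Qed.

Lemma trace_y y : 0 <= y -> Phi 0 y = Psi 0 y.
Proof.
  intros Hy. unfold Phi, Psi. rewrite Rminus_0_l, Rplus_0_l, Rmult_0_l, Rplus_0_r.
  destruct (Rle_dec y w).
  - rewrite Ff_neg, Bf_small, P1_zero by auto. ring.
  - rewrite Ff_negbig, Bf_big by lra. ring.
Qed.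
Lemma trace_x x : 0 <= x -> Phi x 0 = Psi x 0.
Proof.
  intros Hx. unfold Phi, Psi. rewrite !Rminus_0_r, !Rplus_0_r.
  rewrite Ff_pos by auto. rewrite Bf_small by lra. unfold Rdiv. ring.
Qed.

Lemma Phiy_0 y : 0 <= y -> Phiy 0 y = qq y.
Proof.
  intros Hy. unfold Phiy. rewrite Rminus_0_l. destruct (Rle_dec y w).
  - rewrite Fd_neg, Bd_small, qq_zero by auto. ring.
  - rewrite Fd_negbig, Bd_big by lra. ring.
Qed.
Lemma Psiy_0 y : 0 <= y -> Psiy 0 y = qq y.
Proof. intros; unfold Psiy; rewrite Rplus_0_l; ring. Qed.
Lemma Phix_0 x : Phix x 0 = Fd x.
Proof. unfold Phix; rewrite Rminus_0_r; auto. Qed.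
Lemma Psix_0 x : 0 <= x -> Psix x 0 = Fd x.
Proof. intros; unfold Psix; rewrite Rplus_0_r, Fd_pos; auto. Qed.
Lemma Phix_0y_min y : 0 <= y -> Rmin (Phix 0 y) 0 = - qq y.
Proof.
  intros Hy. unfold Phix. rewrite Rminus_0_l. destruct (Rle_dec y w).
  - rewrite qq_zero by auto. rewrite Rmin_right; [ring|]. apply Fd_neg_nonneg; auto.
  - rewrite Fd_negbig by lra. pose proof (q_nonneg dk y). unfold qq in *. rewrite Rmin_left; lra.
Qed.
Lemma Phiy_x0 x : 0 <= x -> 0 <= - Phiy x 0.
Proof.
  intros Hx. unfold Phiy. rewrite Rminus_0_r. rewrite Bd_small by lra.
  pose proof (Fd_ge_p x Hx). unfold Rdiv in *. lra.
Qed.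
Lemma Psiy_bounds x y : 0 <= x -> 0 <= y -> 0 <= Psiy x y <= qq (x + y) + 1.
Proof.
  intros Hx Hy. unfold Psiy. pose proof (xMd_le x (x + y) ltac:(lra)). pose proof (q_nonneg dk (x + y)).
  unfold qq in *; lra.
Qed.
Lemma Psix_ge x y : 0 <= x -> 0 <= y -> Mf (x + y) <= Psix x y.
Proof.
  intros Hx Hy. unfold Psix. pose proof (xMd_le x (x + y) ltac:(lra)). pose proof (q_nonneg dk (x + y)).
  unfold qq in *; lra.
Qed.
Lemma Phi_interior x y : 0 <= x -> 0 <= y ->
  - Phiy x y = Phix x y \/ (0 <= - Phiy x y /\ - Phiy x y <= Phix x y).
Proof.
  intros Hx Hy. unfold Phiy, Phix. destruct (Rle_dec w y).
  - left. rewrite Bd_big by auto. ring.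
  - right. rewrite Bd_small by lra.
    pose proof (Fd_mono_from y (x - y) ltac:(lra) ltac:(lra)).
    rewrite Fd_neg in H by lra.
    assert (y / w <= 1) by (apply Rmult_le_reg_r with w; [lra|]; unfold Rdiv; rewrite Rmult_assoc, Rinv_l by lra; lra).
    assert (0 <= p * (1 - y / w)) by nra. split; lra.
Qed.

Lemma Phi_nonneg x y : 0 <= x -> 0 <= y -> 0 <= Phi x y.
Proof. intros; unfold Phi. pose proof (Ff_ge_B x y H H0). lra. Qed.
Lemma Psi_nonneg x y : 0 <= x -> 0 <= y -> 0 <= Psi x y.
Proof. intros; unfold Psi. pose proof (Phi1_nonneg dk (x + y)). pose proof (Mf_ge (x + y) ltac:(lra)).
  unfold P1. nra. Qed.
Lemma Phi_00 : Phi 0 0 = 0.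
Proof. unfold Phi. rewrite Rminus_0_r. replace 0 with (- 0) at 1 by ring.
  rewrite Ff_neg, Bf_small by lra. ring. Qed.
Lemma Psi_00 : Psi 0 0 = 0.
Proof. unfold Psi. rewrite Rplus_0_r, Rmult_0_l, Rplus_0_r. apply P1_zero; auto; lra. Qed.
Lemma Phi_diag x : 0 <= x -> 0 <= Phi x x <= f0.
Proof.
  intros Hx. unfold Phi. replace (x - x) with (- 0) by ring.
  rewrite Ff_neg by lra. pose proof (Bf_bounds x Hx). unfold Rdiv; rewrite Rmult_0_l, Rminus_0_r, Rmult_1_r.
  lra.
Qed.
Lemma Phi_lower x y : 0 <= x -> 0 <= y -> P1 (Rabs (x - y)) - f0 <= Phi x y.
Proof.
  intros Hx Hy. unfold Phi. pose proof (Bf_bounds y Hy). pose proof f0_pos.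
  destruct (Rle_dec 0 (x - y)).
  - rewrite Rabs_right by lra. rewrite Ff_pos by auto. pose proof (Mf_ge (x - y) r).
    assert (0 <= (x - y) * Mf (x - y)) by (apply Rmult_le_pos; lra). lra.
  - rewrite Rabs_left by lra. destruct (Rle_dec (- (x - y)) w).
    + rewrite P1_zero by auto. pose proof (Ff_nonneg (x - y)). lra.
    + replace (Ff (x - y)) with (Ff (- (- (x - y)))) by (f_equal; ring). rewrite Ff_negbig by lra. lra.
Qed.
Lemma Psi_lower x y : 0 <= x -> 0 <= y -> P1 (x + y) <= Psi x y.
Proof. intros; unfold Psi. pose proof (Mf_ge (x + y) ltac:(lra)). assert (0 <= x * Mf (x + y)) by (apply Rmult_le_pos; lra). lra. Qed.

Lemma Phi_grad_lip x y x' y' :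
  Rabs (Phix x y - Phix x' y') + Rabs (Phiy x y - Phiy x' y') <= (6 + 3 * (p / w)) * (Rabs (x - x') + Rabs (y - y')).
Proof.
  unfold Phix, Phiy.
  pose proof (Fd_lip (x - y) (x' - y')).
  pose proof (Bd_lip y y').
  replace (- Fd (x - y) - Bd y - (- Fd (x' - y') - Bd y')) with (- (Fd (x - y) - Fd (x' - y')) - (Bd y - Bd y')) by ring.
  assert (Hu : Rabs (x - y - (x' - y')) <= Rabs (x - x') + Rabs (y - y')).
  { replace (x - y - (x' - y')) with ((x - x') + - (y - y')) by ring.
    eapply Rle_trans; [apply Rabs_triang|]. rewrite Rabs_Ropp; lra. }
  assert (Hpw : 0 < p / w) by (apply Rdiv_lt_0_compat; lra).
  pose proof (Rabs_pos (x - x')); pose proof (Rabs_pos (y - y')).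
  assert (A1 : (3 + p / w) * Rabs (x - y - (x' - y')) <= (3 + p / w) * (Rabs (x - x') + Rabs (y - y'))) by (apply Rmult_le_compat_l; lra).
  assert (A2 : p / w * Rabs (y - y') <= p / w * (Rabs (x - x') + Rabs (y - y'))) by (apply Rmult_le_compat_l; lra).
  replace (- (Fd (x - y) - Fd (x' - y')) - (Bd y - Bd y')) with (- (Fd (x - y) - Fd (x' - y')) + - (Bd y - Bd y')) by ring.
  pose proof (Rabs_triang (- (Fd (x - y) - Fd (x' - y'))) (- (Bd y - Bd y'))) as T. rewrite !Rabs_Ropp in T.
  assert (E : (6 + 3 * (p / w)) * (Rabs (x - x') + Rabs (y - y')) =
     2 * ((3 + p / w) * (Rabs (x - x') + Rabs (y - y'))) + p / w * (Rabs (x - x') + Rabs (y - y'))) by ring.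
  lra.
Qed.

Lemma Psi_grad_lip K x y x' y' : 0 <= x -> 0 <= y -> 0 <= x' -> 0 <= y' -> x' <= K ->
  Rabs (Psix x y - Psix x' y') + Rabs (Psiy x y - Psiy x' y') <= (6 + 2 * K) * (Rabs (x - x') + Rabs (y - y')).
Proof.
  intros Hx Hy Hx' Hy' HK. unfold Psix, Psiy.
  set (d := x + y). set (d' := x' + y').
  assert (Hd : Rabs (d - d') <= Rabs (x - x') + Rabs (y - y')).
  { unfold d, d'. replace (x + y - (x' + y')) with ((x - x') + (y - y')) by ring. apply Rabs_triang. }
  pose proof (q_lip dk Hd0 Hdinc d d'). pose proof (Mf_lip d d' ltac:(unfold d; lra) ltac:(unfold d'; lra)).
  pose proof (Md_lip d d' ltac:(unfold d; lra) ltac:(unfold d'; lra)).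
  assert (Hm : Rabs (x * Md d - x' * Md d') <= Rabs (x - x') + K * Rabs (d - d')).
  { replace (x * Md d - x' * Md d') with ((x - x') * Md d + x' * (Md d - Md d')) by ring.
    eapply Rle_trans; [apply Rabs_triang|]. rewrite !Rabs_mult.
    pose proof (Md_bounds d ltac:(unfold d; lra)). rewrite (Rabs_right (Md d)) by lra. rewrite (Rabs_right x') by lra.
    pose proof (Rabs_pos (x - x')). pose proof (Rabs_pos (Md d - Md d')). pose proof (Rabs_pos (d - d')).
    assert (Rabs (x - x') * Md d <= Rabs (x - x')) by (rewrite <- (Rmult_1_r (Rabs (x - x'))) at 2; apply Rmult_le_compat_l; lra).
    assert (x' * Rabs (Md d - Md d') <= K * Rabs (d - d')) by (apply Rmult_le_compat; lra).
    lra. }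
  replace (qq d + Mf d + x * Md d - (qq d' + Mf d' + x' * Md d')) with
    ((qq d - qq d') + (Mf d - Mf d') + (x * Md d - x' * Md d')) by ring.
  replace (qq d + x * Md d - (qq d' + x' * Md d')) with ((qq d - qq d') + (x * Md d - x' * Md d')) by ring.
  pose proof (Rabs_triang (qq d - qq d' + (Mf d - Mf d')) (x * Md d - x' * Md d')).
  pose proof (Rabs_triang (qq d - qq d') (Mf d - Mf d')).
  pose proof (Rabs_triang (qq d - qq d') (x * Md d - x' * Md d')).
  pose proof (Rabs_pos (x - x')); pose proof (Rabs_pos (y - y')).
  assert (0 <= K) by lra.
  assert (K * Rabs (d - d') <= K * (Rabs (x - x') + Rabs (y - y'))) by (apply Rmult_le_compat_l; lra).
  assert (E : (6 + 2 * K) * (Rabs (x - x') + Rabs (y - y')) = 6 * (Rabs (x - x') + Rabs (y - y')) + 2 * (K * (Rabs (x - x') + Rabs (y - y')))) by ring.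
  unfold qq in *. lra.
Qed.

Lemma Phi_grad_bound K x y : 0 <= y -> Rabs (x - y) <= K ->
  Rabs (Phix x y) + Rabs (Phiy x y) <= 3 * p + 2 * (3 + p / w) * K.
Proof.
  intros Hy HK. unfold Phix, Phiy.
  pose proof (Fd_lip (x - y) 0).
  assert (E : Fd 0 = p) by (rewrite Fd_pos by lra; rewrite qq_zero by lra; rewrite Mf_pos by lra;
    rewrite Rplus_0_r, ln_1; ring).
  rewrite E, Rminus_0_r in H.
  pose proof (Bd_bound y Hy).
  assert (Hpw : 0 < p / w) by (apply Rdiv_lt_0_compat; lra).
  assert ((3 + p / w) * Rabs (x - y) <= (3 + p / w) * K) by (apply Rmult_le_compat_l; lra).
  assert (Rabs (Fd (x - y)) <= p + (3 + p / w) * K).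
  { replace (Fd (x - y)) with ((Fd (x - y) - p) + p) by ring. eapply Rle_trans; [apply Rabs_triang|].
    rewrite (Rabs_right p) by lra. lra. }
  pose proof (Rabs_triang (- Fd (x - y)) (- Bd y)). rewrite !Rabs_Ropp in H3.
  replace (- Fd (x - y) - Bd y) with (- Fd (x - y) + - Bd y) by ring. lra.
Qed.

Lemma Psi_grad_bound K x y : 0 <= x -> 0 <= y -> x + y <= K ->
  Rabs (Psix x y) + Rabs (Psiy x y) <= 3 * K + p + 2.
Proof.
  intros Hx Hy HK.
  pose proof (Psiy_bounds x y Hx Hy). pose proof (Psix_ge x y Hx Hy). pose proof (Mf_ge (x + y) ltac:(lra)).
  pose proof (q_lip dk Hd0 Hdinc (x + y) 0). assert (Z0 : q dk 0 = 0) by (apply q_zero; auto; lra).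
  rewrite Z0 in H2. rewrite !Rminus_0_r in H2.
  pose proof (Mf_lip (x + y) 0 ltac:(lra) ltac:(lra)). rewrite !Rminus_0_r in H3.
  rewrite (Mf_pos 0), Rplus_0_r, ln_1, Rplus_0_r in H3 by lra.
  rewrite (Rabs_right (x + y)) in H2, H3 by lra.
  pose proof (xMd_le x (x + y) ltac:(lra)).
  rewrite (Rabs_right (Psix x y)) by lra. rewrite (Rabs_right (Psiy x y)) by lra.
  unfold Psix, Psiy. pose proof (q_nonneg dk (x + y)).
  rewrite Rabs_right in H2 by lra. pose proof (Rle_abs (Mf (x + y) - p)). unfold qq in *. lra.
Qed.


End C.


Section Ham.
Variable N : nat.
Variable H : nat -> R -> R.
Hypothesis HN : (1 <= N)%nat.
Hypothesis Hyp : forall a, (a < N)%nat ->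
     lipschitz (H a) /\ coercive (H a) /\ quasi_convex (H a) /\ (forall p, H a 0 <= H a p).

Lemma H_mono a u v : (a < N)%nat -> 0 <= u <= v -> H a u <= H a v.
Proof.
  intros Ha [Hu Huv]. destruct (Hyp a Ha) as [_ [_ [Hq Hm]]].
  destruct (Req_dec v 0) as [->|Hv].
  - assert (u = 0) by lra; subst; lra.
  - pose proof (Hq v 0 (u / v) ltac:(split; [apply Rdiv_le_0_compat; lra|
      apply Rmult_le_reg_r with v; [lra|]; unfold Rdiv; rewrite Rmult_assoc, Rinv_l by lra; lra])).
    replace (u / v * v + (1 - u / v) * 0) with u in H0 by (field; lra).
    pose proof (Hm v). unfold Rmax in H0. destruct Rle_dec; lra.
Qed.

Lemma H0_le a : (a < N)%nat -> H a 0 <= A0 N H.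
Proof. intros; unfold A0; apply (maxJ_ge N (fun a => H a 0)); auto. Qed.

Lemma Lcom n : (n <= N)%nat -> exists L, 0 <= L /\ forall a, (a < n)%nat -> forall u v, Rabs (H a u - H a v) <= L * Rabs (u - v).
Proof.
  induction n; intros Hn.
  - exists 0; split; [lra|]; intros; lia.
  - destruct (IHn ltac:(lia)) as [L [HL0 HL]].
    destruct (Hyp n ltac:(lia)) as [[Ln HLn] _].
    exists (Rmax L Ln). split; [eapply Rle_trans; [apply HL0|apply Rmax_l]|].
    intros a Ha u v. pose proof (Rabs_pos (u - v)).
    destruct (Nat.eq_dec a n) as [->|Hne].
    + eapply Rle_trans; [apply HLn|]. apply Rmult_le_compat_r; auto. apply Rmax_r.
    + eapply Rle_trans; [apply HL; lia|]. apply Rmult_le_compat_r; auto. apply Rmax_l.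
Qed.

Lemma Rcom n m : (n <= N)%nat -> exists R0, forall a, (a < n)%nat -> forall u, R0 <= u -> m <= H a u.
Proof.
  induction n; intros Hn.
  - exists 0; intros; lia.
  - destruct (IHn ltac:(lia)) as [R1 HR1].
    destruct (Hyp n ltac:(lia)) as [_ [Hc _]]. destruct (Hc m) as [Rn HRn].
    exists (Rmax R1 Rn). intros a Ha u Hu.
    destruct (Nat.eq_dec a n) as [->|Hne].
    + apply HRn. pose proof (Rmax_r R1 Rn). pose proof (Rle_abs u). lra.
    + apply HR1; [lia|]. pose proof (Rmax_l R1 Rn). lra.
Qed.

End Ham.

Fixpoint nodes (D0 : R) (f : nat -> R) (k : nat) : R :=
  match k with O => D0 | S k => Rmax (nodes D0 f k + 1) (f k) end.

Lemma nodes_inc D0 f k : nodes D0 f k + 1 <= nodes D0 f (S k).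
Proof. simpl; apply Rmax_l. Qed.
Lemma nodes_f D0 f k : f k <= nodes D0 f (S k).
Proof. simpl; apply Rmax_r. Qed.


Section Final.
Variable N : nat.
Variable H : nat -> R -> R.
Hypothesis HN : (1 <= N)%nat.
Hypothesis Hyp : forall a, (a < N)%nat ->
     lipschitz (H a) /\ coercive (H a) /\ quasi_convex (H a) /\ (forall p, H a 0 <= H a p).
Variable L : R.
Hypothesis HL0 : 0 <= L.
Hypothesis HL : forall a, (a < N)%nat -> forall u v, Rabs (H a u - H a v) <= L * Rabs (u - v).
Variable Rad : R -> R.
Hypothesis HRad : forall m a, (a < N)%nat -> forall u, Rad m <= u -> m <= H a u.

Definition A0' := A0 N H.
Definition pp := Rmax 1 (Rad (A0' + 2 * L)).
Definition dks := nodes (1 + / pp) (fun k => exp (Rad (A0' + L * (INR k + 3)))).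

Lemma pp_pos : 0 < pp.
Proof. unfold pp; pose proof (Rmax_l 1 (Rad (A0' + 2 * L))); lra. Qed.
Lemma dks_0 : dks 0 = 1 + / pp.
Proof. reflexivity. Qed.
Lemma dks_d0 : 0 <= dks 0.
Proof. rewrite dks_0. pose proof (Rinv_0_lt_compat _ pp_pos). lra. Qed.
Lemma dks_inc k : dks k + 1 <= dks (S k).
Proof. apply nodes_inc. Qed.

Lemma pp_H a u : (a < N)%nat -> pp <= u -> A0' + 2 * L <= H a u.
Proof. intros Ha Hu. apply (HRad _ a Ha). pose proof (Rmax_r 1 (Rad (A0' + 2 * L))). unfold pp in Hu; lra. Qed.

Lemma design d a : 0 <= d -> (a < N)%nat -> A0' + L * (q dks d + 1) <= H a (Mf pp d).
Proof.
  intros Hd Ha.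
  assert (K : forall n d, 0 <= d <= dks n -> A0' + L * (q dks d + 1) <= H a (Mf pp d)).
  { induction n; intros d0 [H1 H2].
    - rewrite q_zero; auto using dks_d0, dks_inc.
      pose proof (pp_H a (Mf pp d0) Ha (Mf_ge pp d0 H1)). lra.
    - destruct (Rle_dec d0 (dks n)) as [Hle|Hlt]; [apply IHn; lra|].
      pose proof (q_le_n dks dks_inc (S n) d0 H2) as Hq.
      destruct n.
      + pose proof (pp_H a (Mf pp d0) Ha (Mf_ge pp d0 H1)).
        change (INR 1) with 1 in Hq. assert (L * (q dks d0 + 1) <= L * 2) by (apply Rmult_le_compat_l; lra). lra.
      + assert (Hn : exp (Rad (A0' + L * (INR n + 3))) <= dks (S n)) by apply (nodes_f _ (fun k => exp (Rad (A0' + L * (INR k + 3)))) n).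
        assert (Hm : Rad (A0' + L * (INR n + 3)) <= Mf pp d0).
        { rewrite Mf_pos by auto. pose proof (exp_pos (Rad (A0' + L * (INR n + 3)))).
          assert (ln (exp (Rad (A0' + L * (INR n + 3)))) <= ln (1 + d0)) by (apply ln_le; lra).
          rewrite ln_exp in H3. pose proof pp_pos. lra. }
        pose proof (HRad _ a Ha _ Hm).
        rewrite !S_INR in Hq.
        assert (L * (q dks d0 + 1) <= L * (INR n + 3)) by (apply Rmult_le_compat_l; lra). lra. }
  apply (K (nmax d)). split; auto. pose proof (nmax_ge d). pose proof (dk_geINR dks dks_d0 dks_inc (nmax d)). lra.
Qed.

Lemma cross x y a b : 0 <= x -> 0 <= y -> (a < N)%nat -> (b < N)%nat ->
  H b (- Psiy dks x y) <= H a (Psix pp dks x y).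
Proof.
  intros Hx Hy Ha Hb.
  pose proof (Psiy_bounds dks x y Hx Hy).
  pose proof (HL b Hb (- Psiy dks x y) 0). rewrite Rminus_0_r, Rabs_Ropp, (Rabs_right (Psiy dks x y)) in H1 by lra.
  pose proof (H0_le N H b Hb). fold A0' in H2.
  pose proof (design (x + y) a ltac:(lra) Ha).
  assert (L * Psiy dks x y <= L * (q dks (x + y) + 1)) by (apply Rmult_le_compat_l; auto; unfold qq in H0; lra).
  pose proof (Psix_ge pp dks x y Hx Hy).
  pose proof (H_mono N H Hyp a (Mf pp (x + y)) (Psix pp dks x y) Ha ltac:(split; [pose proof (Mf_ge pp (x+y) ltac:(lra)); pose proof pp_pos; lra|lra])).
  pose proof (Rle_abs (H b (- Psiy dks x y) - H b 0)). lra.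
Qed.

Variable gamma : R.
Hypothesis Hg : 0 < gamma.
Definition lam := Rmax 1 gamma.
Definition ww := gamma / (lam * pp).
Lemma lam_ge1 : 1 <= lam.
Proof. apply Rmax_l. Qed.
Lemma lam_geg : gamma <= lam.
Proof. apply Rmax_r. Qed.
Lemma lam_pos : 0 < lam.
Proof. pose proof lam_ge1; lra. Qed.
Lemma ww_pos : 0 < ww.
Proof. unfold ww. apply Rdiv_lt_0_compat; auto. pose proof lam_pos; pose proof pp_pos; nra. Qed.
Lemma ww_le : ww <= dks 0.
Proof.
  rewrite dks_0. pose proof lam_pos; pose proof pp_pos. pose proof lam_geg.
  assert (ww <= / pp).
  { unfold ww. apply Rmult_le_reg_r with (lam * pp); [nra|].
    unfold Rdiv. rewrite Rmult_assoc, Rinv_l by nra.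
    replace (/ pp * (lam * pp)) with lam by (field; lra). lra. }
  lra.
Qed.
Lemma lam_ww : lam * f0 pp ww = gamma / 2.
Proof. unfold f0, ww. pose proof lam_pos; pose proof pp_pos. field; lra. Qed.

Let Hw := ww_pos.
Let Hwd := ww_le.
Let Hp := pp_pos.
Let Hdinc := dks_inc.
Let Hd0 := dks_d0.

Definition PhiS x y := lam * Phi pp dks ww (x / lam) (y / lam).
Definition PsiS x y := lam * Psi pp dks (x / lam) (y / lam).
Definition PhixS x y := Phix pp dks ww (x / lam) (y / lam).
Definition PhiyS x y := Phiy pp dks ww (x / lam) (y / lam).
Definition PsixS x y := Psix pp dks (x / lam) (y / lam).
Definition PsiyS x y := Psiy dks (x / lam) (y / lam).
Definition GG := Gof PhiS PsiS.
Definition GGx := Gof PhixS PsixS.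
Definition GGy := Gof PhiyS PsiyS.

Lemma div_nonneg x : 0 <= x -> 0 <= x / lam.
Proof. intros; apply Rdiv_le_0_compat; auto; apply lam_pos. Qed.
Lemma div0 : 0 / lam = 0.
Proof. unfold Rdiv; ring. Qed.

Lemma GGy_vertex a b y : 0 <= y -> GGy a 0 b y = qq dks (y / lam).
Proof.
  intros Hy. unfold GGy, Gof, PhiyS, PsiyS. rewrite div0.
  destruct (Nat.eq_dec a b).
  - apply Phiy_0; auto. apply div_nonneg; auto.
  - apply Psiy_0. apply div_nonneg; auto.
Qed.
Lemma GGx_vertex a b x : 0 <= x -> GGx a x b 0 = Fd pp dks ww (x / lam).
Proof.
  intros Hx. unfold GGx, Gof, PhixS, PsixS. rewrite div0.
  destruct (Nat.eq_dec a b).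
  - apply Phix_0.
  - apply Psix_0; auto. apply div_nonneg; auto.
Qed.

Lemma prop_iv a x b y : inJ N a x -> inJ N b y ->
  Hbold N H (A0 N H + gamma) b y (fun c => - GGy a x c y)
  - Hbold N H (A0 N H + gamma) a x (fun c => GGx c x b y) <= gamma.
Proof.
  intros [Ha Hx] [Hb Hy].
  pose proof (div_nonneg x Hx) as HX. pose proof (div_nonneg y Hy) as HY.
  fold A0'.
  destruct (Req_dec y 0) as [Hy0|Hy0]; destruct (Req_dec x 0) as [Hx0|Hx0].
  - subst x y. rewrite !Hbold_z.
    assert (FA N H (A0' + gamma) (fun c => - GGy a 0 c 0) <= A0' + gamma).
    { apply FA_le; auto; [lra|]. intros c Hc. rewrite GGy_vertex by lra. rewrite div0.
      unfold qq; rewrite (q_zero dks dks_inc 0) by (pose proof dks_d0; lra).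
      unfold Hminus. replace (Rmin (- 0) 0) with 0 by (unfold Rmin; destruct Rle_dec; lra).
      pose proof (H0_le N H c Hc). fold A0' in H0. lra. }
    pose proof (FA_ge_A N H (A0' + gamma) (fun c => GGx c 0 b 0)). lra.
  - subst y. rewrite Hbold_z, Hbold_nz by auto.
    rewrite GGx_vertex by auto.
    assert (HF : A0' <= H a (Fd pp dks ww (x / lam))).
    { pose proof (Fd_ge_p pp dks dks_inc ww ww_pos ww_le (x / lam) HX).
      pose proof (pp_H a _ Ha H0). lra. }
    assert (FA N H (A0' + gamma) (fun c => - GGy a x c 0) <= H a (Fd pp dks ww (x / lam)) + gamma).
    { apply FA_le; auto; [lra|]. intros c Hc. unfold Hminus, GGy, Gof.
      destruct (Nat.eq_dec a c).
      - subst c. unfold PhiyS. rewrite div0.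
        pose proof (Phiy_x0 pp dks dks_inc ww ww_pos ww_le (x / lam) HX).
        rewrite Rmin_right by lra. pose proof (H0_le N H a Ha). fold A0' in H1. lra.
      - unfold PsiyS. rewrite div0.
        pose proof (Psiy_bounds dks (x / lam) 0 HX ltac:(lra)).
        rewrite Rmin_left by lra.
        pose proof (cross (x / lam) 0 a c HX ltac:(lra) Ha Hc).
        rewrite (Psix_0 pp dks dks_inc ww ww_pos ww_le) in H1 by auto. lra. }
    lra.
  - subst x. rewrite Hbold_nz, Hbold_z by auto.
    rewrite GGy_vertex by auto.
    pose proof (FA_ge N H (A0' + gamma) (fun c => GGx c 0 b y) b Hb). cbv beta in H0.
    assert (E : Hminus (H b) (GGx b 0 b y) = H b (- qq dks (y / lam))).
    { unfold Hminus, GGx, Gof. destruct (Nat.eq_dec b b); [|contradiction].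
      unfold PhixS. rewrite div0. f_equal. apply Phix_0y_min; auto. }
    rewrite E in H0. lra.
  - rewrite !Hbold_nz by auto. unfold GGx, GGy, Gof.
    destruct (Nat.eq_dec a b).
    + subst b. unfold PhiyS, PhixS.
      destruct (Phi_interior pp pp_pos dks dks_inc ww ww_pos ww_le (x / lam) (y / lam) HX HY) as [E|[E1 E2]].
      * rewrite E. lra.
      * pose proof (H_mono N H Hyp a _ _ Ha (conj E1 E2)). lra.
    + unfold PsiyS, PsixS. pose proof (cross (x / lam) (y / lam) a b HX HY Ha Hb). lra.
Qed.

Lemma cont2_scale f l x y : 0 < l -> cont2 f (x / l) (y / l) -> cont2 (fun a b => l * f (a / l) (b / l)) x y.
Proof.
  intros Hl Hf eps Heps. destruct (Hf (eps / l)) as [d [Pd Qd]]; [apply Rdiv_lt_0_compat; auto|].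
  exists (d * l); split; [nra|]. intros a b Ha Hb.
  assert (Rabs (a / l - x / l) < d).
  { replace (a / l - x / l) with ((a - x) * / l) by (field; lra). rewrite Rabs_mult, (Rabs_right (/ l)) by (left; apply Rinv_0_lt_compat; auto).
    apply Rmult_lt_reg_r with l; auto. rewrite Rmult_assoc, Rinv_l by lra. lra. }
  assert (Rabs (b / l - y / l) < d).
  { replace (b / l - y / l) with ((b - y) * / l) by (field; lra). rewrite Rabs_mult, (Rabs_right (/ l)) by (left; apply Rinv_0_lt_compat; auto).
    apply Rmult_lt_reg_r with l; auto. rewrite Rmult_assoc, Rinv_l by lra. lra. }
  specialize (Qd _ _ H0 H1).
  replace (l * f (a / l) (b / l) - l * f (x / l) (y / l)) with (l * (f (a / l) (b / l) - f (x / l) (y / l))) by ring.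
  rewrite Rabs_mult, (Rabs_right l) by lra.
  apply Rmult_lt_compat_l with (r := l) in Qd; auto. replace (l * (eps / l)) with eps in Qd by (field; lra). lra.
Qed.

Lemma prop_cont : cont_J2 N GG.
Proof.
  unfold GG. apply cont_J2_Gof.
  - intros x y Hx Hy. apply cont2_scale; [apply lam_pos|]. apply Phi_cont; auto.
  - intros x y Hx Hy. apply cont2_scale; [apply lam_pos|]. apply Psi_cont; auto.
  - intros y Hy. unfold PhiS, PsiS. rewrite div0. f_equal. apply trace_y; auto. apply div_nonneg; auto.
  - intros x Hx. unfold PhiS, PsiS. rewrite div0. f_equal. apply trace_x; auto. apply div_nonneg; auto.
Qed.

Lemma dpl_scale f l x d : 0 < l -> derivable_pt_lim f (x / l) d -> derivable_pt_lim (fun s => l * f (s / l)) x d.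
Proof.
  intros Hl Hd.
  apply (dpl_ext (fun s => l * f (/ l * s + 0))); [intros; f_equal; f_equal; unfold Rdiv; ring|].
  apply (dpl_eqv _ _ (0 * f (/ l * x + 0) + l * (d * / l))); [field; lra|].
  apply (dpl_mult (fun _ => l) (fun s => f (/ l * s + 0))); [apply dpl_const|].
  apply dpl_affine. replace (/ l * x + 0) with (x / l) by (unfold Rdiv; ring). auto.
Qed.

Lemma dpl_branch f x l : derivable_pt_lim f x l -> branch_deriv f x l.
Proof.
  intros Hd eps Heps. destruct (Hd eps Heps) as [d Hdd]. exists d; split; [apply (cond_pos d)|].
  intros h Hh _ Hhd. apply Hdd; auto.
Qed.

Lemma prop_deriv a x b y : inJ N a x -> inJ N b y ->
  branch_deriv (fun s => GG a s b y) x (GGx a x b y) /\ branch_deriv (fun t => GG a x b t) y (GGy a x b y).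
Proof.
  intros _ _. unfold GG, GGx, GGy, Gof. destruct (Nat.eq_dec a b); split; apply dpl_branch.
  - unfold PhiS, PhixS. apply (dpl_scale (fun s => Phi pp dks ww s (y / lam))); [apply lam_pos|].
    apply Phi_dx; auto.
  - unfold PhiS, PhiyS. apply (dpl_scale (fun t => Phi pp dks ww (x / lam) t)); [apply lam_pos|].
    apply Phi_dy; auto.
  - unfold PsiS, PsixS. apply (dpl_scale (fun s => Psi pp dks s (y / lam))); [apply lam_pos|].
    apply Psi_dx; auto.
  - unfold PsiS, PsiyS. apply (dpl_scale (fun t => Psi pp dks (x / lam) t)); [apply lam_pos|].
    apply Psi_dy; auto.
Qed.

Lemma cont_half_lip f : (forall x, 0 <= x -> exists C, 0 <= C /\ forall x', 0 <= x' -> Rabs (f x' - f x) <= C * Rabs (x' - x)) ->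
  cont_half f.
Proof.
  intros Hl x Hx eps Heps. destruct (Hl x Hx) as [C [HC HCl]].
  exists (eps / (C + 1)); split; [apply Rdiv_lt_0_compat; lra|].
  intros x' Hx' Hd. eapply Rle_lt_trans; [apply HCl; auto|].
  apply Rle_lt_trans with ((C + 1) * Rabs (x' - x)); [pose proof (Rabs_pos (x' - x)); nra|].
  apply Rmult_lt_reg_r with (/ (C + 1)); [apply Rinv_0_lt_compat; lra|].
  replace ((C + 1) * Rabs (x' - x) * / (C + 1)) with (Rabs (x' - x)) by (field; lra). auto.
Qed.

Lemma absdiv u v : Rabs (u / lam - v / lam) = Rabs (u - v) / lam.
Proof.
  pose proof lam_pos. replace (u / lam - v / lam) with ((u - v) / lam) by (field; lra).
  unfold Rdiv. rewrite Rabs_mult, (Rabs_right (/ lam)); auto. left; apply Rinv_0_lt_compat; auto.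
Qed.

Lemma prop_conthalf_x a b y : (a < N)%nat -> inJ N b y -> cont_half (fun s => GGx a s b y).
Proof.
  intros _ [_ Hy]. apply cont_half_lip. intros x Hx. pose proof lam_pos.
  unfold GGx, Gof. destruct (Nat.eq_dec a b).
  - exists ((6 + 3 * (pp / ww)) / lam). split.
    { apply Rdiv_le_0_compat; auto. pose proof (Rdiv_lt_0_compat _ _ pp_pos ww_pos). lra. }
    intros x' Hx'. unfold PhixS.
    pose proof (Phi_grad_lip pp pp_pos dks dks_d0 dks_inc ww ww_pos ww_le (x' / lam) (y / lam) (x / lam) (y / lam)).
    replace (y / lam - y / lam) with 0 in H1 by ring. rewrite Rabs_R0, Rplus_0_r in H1. rewrite absdiv in H1.
    pose proof (Rabs_pos (Phiy pp dks ww (x' / lam) (y / lam) - Phiy pp dks ww (x / lam) (y / lam))).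
    unfold Rdiv in *. lra.
  - exists ((6 + 2 * (x / lam)) / lam). split.
    { apply Rdiv_le_0_compat; auto. pose proof (div_nonneg x Hx). lra. }
    intros x' Hx'. unfold PsixS.
    pose proof (Psi_grad_lip pp dks dks_d0 dks_inc (x / lam) (x' / lam) (y / lam) (x / lam) (y / lam)
      (div_nonneg _ Hx') (div_nonneg _ Hy) (div_nonneg _ Hx) (div_nonneg _ Hy) (Rle_refl _)).
    replace (y / lam - y / lam) with 0 in H1 by ring. rewrite Rabs_R0, Rplus_0_r in H1. rewrite absdiv in H1.
    pose proof (Rabs_pos (Psiy dks (x' / lam) (y / lam) - Psiy dks (x / lam) (y / lam))).
    unfold Rdiv in *. lra.
Qed.

Lemma prop_conthalf_y a x b : inJ N a x -> (b < N)%nat -> cont_half (fun t => GGy a x b t).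
Proof.
  intros [_ Hx] _. apply cont_half_lip. intros y Hy. pose proof lam_pos.
  unfold GGy, Gof. destruct (Nat.eq_dec a b).
  - exists ((6 + 3 * (pp / ww)) / lam). split.
    { apply Rdiv_le_0_compat; auto. pose proof (Rdiv_lt_0_compat _ _ pp_pos ww_pos). lra. }
    intros y' Hy'. unfold PhiyS.
    pose proof (Phi_grad_lip pp pp_pos dks dks_d0 dks_inc ww ww_pos ww_le (x / lam) (y' / lam) (x / lam) (y / lam)).
    replace (x / lam - x / lam) with 0 in H1 by ring. rewrite Rabs_R0, Rplus_0_l in H1. rewrite absdiv in H1.
    pose proof (Rabs_pos (Phix pp dks ww (x / lam) (y' / lam) - Phix pp dks ww (x / lam) (y / lam))).
    unfold Rdiv in *. lra.
  - exists ((6 + 2 * (x / lam)) / lam). split.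
    { apply Rdiv_le_0_compat; auto. pose proof (div_nonneg x Hx). lra. }
    intros y' Hy'. unfold PsiyS.
    pose proof (Psi_grad_lip pp dks dks_d0 dks_inc (x / lam) (x / lam) (y' / lam) (x / lam) (y / lam)
      (div_nonneg _ Hx) (div_nonneg _ Hy') (div_nonneg _ Hx) (div_nonneg _ Hy) (Rle_refl _)).
    replace (x / lam - x / lam) with 0 in H1 by ring. rewrite Rabs_R0, Rplus_0_l in H1. rewrite absdiv in H1.
    pose proof (Rabs_pos (Psix pp dks (x / lam) (y' / lam) - Psix pp dks (x / lam) (y / lam))).
    unfold Rdiv in *. lra.
Qed.

Lemma prop_nonneg a x b y : inJ N a x -> inJ N b y -> 0 <= GG a x b y.
Proof.
  intros [_ Hx] [_ Hy]. pose proof lam_pos. unfold GG, Gof, PhiS, PsiS. destruct (Nat.eq_dec a b).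
  - apply Rmult_le_pos; [lra|]. apply Phi_nonneg; auto; apply div_nonneg; auto.
  - apply Rmult_le_pos; [lra|]. apply Psi_nonneg; auto; apply div_nonneg; auto.
Qed.
Lemma prop_00 a b : GG a 0 b 0 = 0.
Proof.
  unfold GG, Gof, PhiS, PsiS. rewrite div0. destruct (Nat.eq_dec a b).
  - rewrite Phi_00; auto. ring.
  - rewrite (Psi_00 pp dks dks_inc ww ww_pos ww_le). ring.
Qed.
Lemma prop_diag a x : inJ N a x -> 0 <= GG a x a x <= gamma.
Proof.
  intros [_ Hx]. pose proof lam_pos. unfold GG, Gof, PhiS. destruct (Nat.eq_dec a a); [|contradiction].
  pose proof (Phi_diag pp pp_pos dks dks_inc ww ww_pos ww_le (x / lam) (div_nonneg x Hx)).
  pose proof lam_ww. split; [nra|].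
  assert (lam * Phi pp dks ww (x / lam) (x / lam) <= lam * f0 pp ww) by (apply Rmult_le_compat_l; lra). lra.
Qed.

Lemma dJ_scale a x b y : dJ a (x / lam) b (y / lam) = dJ a x b y / lam.
Proof.
  unfold dJ. destruct (Nat.eq_dec a b).
  - apply absdiv.
  - pose proof lam_pos. field; lra.
Qed.

Lemma prop_superlin : exists g : R -> R,
  (forall s t, 0 <= s -> s <= t -> g s <= g t) /\
  (forall a x b y, inJ N a x -> inJ N b y -> g (dJ a x b y) <= GG a x b y) /\
  (forall M, exists R0, forall s, R0 <= s -> 0 < s -> M <= g s / s).
Proof.
  pose proof lam_pos.
  exists (fun s => lam * P1 dks (s / lam) - gamma). split; [|split].
  - intros s t Hs Hst. assert (P1 dks (s / lam) <= P1 dks (t / lam)).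
    { unfold P1. apply Phi1_mono; auto. unfold Rdiv; apply Rmult_le_compat_r; [left; apply Rinv_0_lt_compat|]; lra. }
    assert (lam * P1 dks (s / lam) <= lam * P1 dks (t / lam)) by (apply Rmult_le_compat_l; lra). lra.
  - intros a x b y [_ Hx] [_ Hy]. rewrite <- dJ_scale. unfold GG, Gof, PhiS, PsiS.
    destruct (Nat.eq_dec a b).
    + subst b. rewrite dJ_same.
      pose proof (Phi_lower pp pp_pos dks dks_inc ww ww_pos ww_le (x / lam) (y / lam) (div_nonneg x Hx) (div_nonneg y Hy)).
      assert (lam * (P1 dks (Rabs (x / lam - y / lam)) - f0 pp ww) <= lam * Phi pp dks ww (x / lam) (y / lam))
        by (apply Rmult_le_compat_l; lra).
      pose proof lam_ww. lra.
    + rewrite dJ_diff by auto.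
      pose proof (Psi_lower pp pp_pos dks (x / lam) (y / lam) (div_nonneg x Hx) (div_nonneg y Hy)).
      assert (lam * P1 dks (x / lam + y / lam) <= lam * Psi pp dks (x / lam) (y / lam)) by (apply Rmult_le_compat_l; lra).
      lra.
  - intros M. destruct (Phi1_superlin dks dks_d0 dks_inc (M + 1)) as [R1 HR1].
    exists (Rmax (lam * R1) gamma). intros s Hs Hs0.
    pose proof (Rmax_l (lam * R1) gamma). pose proof (Rmax_r (lam * R1) gamma).
    assert (R1 <= s / lam).
    { apply Rmult_le_reg_r with lam; auto. unfold Rdiv; rewrite Rmult_assoc, Rinv_l by lra. lra. }
    specialize (HR1 _ H3). fold (P1 dks (s / lam)) in HR1.
    assert (H4 : lam * ((M + 1) * (s / lam)) <= lam * P1 dks (s / lam)) by (apply Rmult_le_compat_l; lra).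
    replace (lam * ((M + 1) * (s / lam))) with ((M + 1) * s) in H4 by (field; lra).
    apply Rmult_le_reg_r with s; auto. unfold Rdiv. rewrite Rmult_assoc, Rinv_l by lra. nra.
Qed.

Lemma prop_bound K : 0 <= K -> exists C, forall a x b y, inJ N a x -> inJ N b y ->
       dJ a x b y <= K -> Rabs (GGx a x b y) + Rabs (GGy a x b y) <= C.
Proof.
  intros HK. pose proof lam_pos. pose proof lam_ge1.
  exists (3 * pp + 2 * (3 + pp / ww) * K + (3 * K + pp + 2)).
  intros a x b y [_ Hx] [_ Hy] Hd.
  assert (Hd' : dJ a (x / lam) b (y / lam) <= K).
  { rewrite dJ_scale. apply Rmult_le_reg_r with lam; auto. unfold Rdiv; rewrite Rmult_assoc, Rinv_l by lra.
    pose proof (dJ_scale a x b y). nra. }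
  assert (0 <= 3 * K + pp + 2) by (pose proof pp_pos; lra).
  assert (0 <= 3 * pp + 2 * (3 + pp / ww) * K).
  { pose proof pp_pos. pose proof (Rdiv_lt_0_compat _ _ pp_pos ww_pos). nra. }
  unfold GGx, GGy, Gof. destruct (Nat.eq_dec a b).
  - subst b. rewrite dJ_same in Hd'. unfold PhixS, PhiyS.
    pose proof (Phi_grad_bound pp pp_pos dks dks_d0 dks_inc ww ww_pos ww_le K (x / lam) (y / lam) (div_nonneg y Hy) Hd'). lra.
  - rewrite dJ_diff in Hd' by auto. unfold PsixS, PsiyS.
    pose proof (Psi_grad_bound pp pp_pos dks dks_d0 dks_inc K (x / lam) (y / lam) (div_nonneg x Hx) (div_nonneg y Hy) Hd'). lra.
Qed.

Definition CKf (K : R) := 6 + 2 * Rabs K + 3 * (pp * pp).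

Lemma prop_C11 K : 0 < K -> forall a b x y x' y',
       inJ N a x -> inJ N b y -> inJ N a x' -> inJ N b y' ->
       dJ a x b y <= K -> dJ a x' b y' <= K ->
       Rabs (GGx a x b y - GGx a x' b y') + Rabs (GGy a x b y - GGy a x' b y')
         <= CKf K / gamma * (Rabs (x - x') + Rabs (y - y')).
Proof.
  intros HK a b x y x' y' [_ Hx] [_ Hy] [_ Hx'] [_ Hy'] Hd Hd'.
  pose proof lam_pos. pose proof lam_ge1. pose proof lam_geg. pose proof pp_pos.
  set (S := Rabs (x - x') + Rabs (y - y')).
  assert (HS : 0 <= S) by (unfold S; pose proof (Rabs_pos (x - x')); pose proof (Rabs_pos (y - y')); lra).
  assert (ES : Rabs (x / lam - x' / lam) + Rabs (y / lam - y' / lam) = S / lam) by (rewrite !absdiv; unfold S; field; lra).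
  assert (Hinv : / lam <= / gamma) by (apply Rinv_le_contravar; lra).
  assert (Hig : 0 < / gamma) by (apply Rinv_0_lt_compat; lra).
  unfold GGx, GGy, Gof. destruct (Nat.eq_dec a b).
  - unfold PhixS, PhiyS.
    pose proof (Phi_grad_lip pp pp_pos dks dks_d0 dks_inc ww ww_pos ww_le (x / lam) (y / lam) (x' / lam) (y' / lam)) as T.
    rewrite ES in T.
    assert (E : (6 + 3 * (pp / ww)) * (S / lam) = 6 * S * / lam + 3 * (pp * pp) * S * / gamma).
    { unfold ww. field. lra. }
    rewrite E in T.
    assert (6 * S * / lam <= 6 * S * / gamma) by (apply Rmult_le_compat_l; lra).
    assert (0 <= Rabs K) by apply Rabs_pos.
    assert (CKf K / gamma * S = 6 * S * / gamma + 2 * Rabs K * S * / gamma + 3 * (pp * pp) * S * / gamma)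
      by (unfold CKf; field; lra).
    assert (0 <= 2 * Rabs K * S * / gamma) by (apply Rmult_le_pos; [nra|lra]).
    fold S. lra.
  - unfold PsixS, PsiyS. rewrite dJ_diff in Hd' by auto.
    assert (HxK : x' / lam <= K).
    { apply Rmult_le_reg_r with lam; auto. unfold Rdiv; rewrite Rmult_assoc, Rinv_l by lra.
      pose proof (div_nonneg y' Hy'). nra. }
    pose proof (Psi_grad_lip pp dks dks_d0 dks_inc K (x / lam) (y / lam) (x' / lam) (y' / lam)
      (div_nonneg _ Hx) (div_nonneg _ Hy) (div_nonneg _ Hx') (div_nonneg _ Hy') HxK) as T.
    rewrite ES in T.
    assert ((6 + 2 * K) * (S / lam) <= (6 + 2 * K) * S * / gamma).
    { unfold Rdiv. rewrite <- Rmult_assoc. apply Rmult_le_compat_l; [nra|lra]. }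
    assert (CKf K / gamma * S = (6 + 2 * K) * S * / gamma + 3 * (pp * pp) * S * / gamma).
    { unfold CKf. rewrite Rabs_right by lra. field. lra. }
    assert (0 <= 3 * (pp * pp) * S * / gamma) by (apply Rmult_le_pos; [nra|lra]).
    fold S. lra.
Qed.

End Final.


Theorem proposition5p1 (N : nat) (H : nat -> R -> R) :
  (1 <= N)%nat ->
  (forall a, (a < N)%nat ->
     lipschitz (H a) /\ coercive (H a) /\ quasi_convex (H a) /\
     (forall p, H a 0 <= H a p)) ->
  exists CK : R -> R,
  forall gamma : R, 0 < gamma ->
  exists (G Gx Gy : nat -> R -> nat -> R -> R),
    (* (i) *)
    cont_J2 N G /\
    (forall a x b y, inJ N a x -> inJ N b y ->
       branch_deriv (fun s => G a s b y) x (Gx a x b y) /\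
       branch_deriv (fun t => G a x b t) y (Gy a x b y)) /\
    (forall a b y, (a < N)%nat -> inJ N b y -> cont_half (fun s => Gx a s b y)) /\
    (forall a x b, inJ N a x -> (b < N)%nat -> cont_half (fun t => Gy a x b t)) /\
    (* (ii) *)
    (forall a x b y, inJ N a x -> inJ N b y -> 0 <= G a x b y) /\
    (forall a b, (a < N)%nat -> (b < N)%nat -> G a 0 b 0 = 0) /\
    (* (iii) *)
    (forall a x, inJ N a x -> 0 <= G a x a x <= gamma) /\
    (* (iv) *)
    (forall a x b y, inJ N a x -> inJ N b y ->
       Hbold N H (A0 N H + gamma) b y (fun c => - Gy a x c y)
       - Hbold N H (A0 N H + gamma) a x (fun c => Gx c x b y) <= gamma) /\
    (* (v) *)
    (exists g : R -> R,
       (forall s t, 0 <= s -> s <= t -> g s <= g t) /\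
       (forall a x b y, inJ N a x -> inJ N b y -> g (dJ a x b y) <= G a x b y) /\
       (forall M, exists R0, forall s, R0 <= s -> 0 < s -> M <= g s / s)) /\
    (* (vi) *)
    (forall K, 0 <= K -> exists C, forall a x b y, inJ N a x -> inJ N b y ->
       dJ a x b y <= K -> Rabs (Gx a x b y) + Rabs (Gy a x b y) <= C) /\
    (* C^{1,1} on each piece (J_a x J_b) /\ J_K^2 with ||D^2 G|| <= C_K / gamma *)
    (forall K, 0 < K -> forall a b x y x' y',
       inJ N a x -> inJ N b y -> inJ N a x' -> inJ N b y' ->
       dJ a x b y <= K -> dJ a x' b y' <= K ->
       Rabs (Gx a x b y - Gx a x' b y') + Rabs (Gy a x b y - Gy a x' b y')
         <= CK K / gamma * (Rabs (x - x') + Rabs (y - y'))).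
Proof.
  intros HN Hyp.
  destruct (Lcom N H HN Hyp N (le_n N)) as [L [HL0 HL]].
  assert (Hex : forall m, exists R0, forall a, (a < N)%nat -> forall u, R0 <= u -> m <= H a u)
    by (intro m; apply (Rcom N H HN Hyp N m); lia).
  set (Rad := fun m => proj1_sig (constructive_indefinite_description _ (Hex m))).
  assert (HRad : forall m a, (a < N)%nat -> forall u, Rad m <= u -> m <= H a u).
  { intros m a Ha u Hu. unfold Rad in Hu. destruct (constructive_indefinite_description _ (Hex m)) as [R0 HR0].
    simpl in Hu. apply HR0; auto. }
  exists (CKf N H L Rad). intros gamma Hg.
  exists (GG N H L Rad gamma), (GGx N H L Rad gamma), (GGy N H L Rad gamma).
  split; [apply prop_cont; auto|].
  split; [intros; apply prop_deriv; auto|].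
  split; [intros; apply prop_conthalf_x; auto|].
  split; [intros; apply prop_conthalf_y; auto|].
  split; [intros; apply prop_nonneg; auto|].
  split; [intros; apply prop_00; auto|].
  split; [intros; apply prop_diag; auto|].
  split; [intros; apply prop_iv; auto|].
  split; [apply prop_superlin; auto|].
  split; [intros; apply prop_bound; auto|].
  intros; apply prop_C11; auto.
Qed.
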